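(* Assume in addition that $R(A_3)$ is closed. Let $f\in R(A_2^* )$, $g\in R(A_1^* )$, $k\in K_2$, let $x\in\tilde D_2:=\{\xi\in D(A_2)\cap D(A_1^* ):A_2\xi\in D(A_2^* )\}$ be the unique solution of $A_2^*A_2x=f$, $A_1^*x=g$, $\pi_2x=k$, put $y:=A_2x$, and let $(\tilde x,\tilde y)\in H_2\times H_3$. Set $e:=x-\tilde x$, $h:=y-\tilde y$, $e_{A_1}:=\pi_{A_1}e$, $e_{A_2^*}:=\pi_{A_2^*}e$, $e_{K_2}:=\pi_2e$, $h_{A_2}:=\pi_{A_2}h$, $h_{A_3^*}:=\pi_{A_3^*}h$, $h_{K_3}:=\pi_3h$. Then: (i) $e=e_{A_1}+e_{K_2}+e_{A_2^*}\in R(A_1)\oplus K_2\oplus R(A_2^* )$, $h=h_{A_2}+h_{K_3}+h_{A_3^*}\in R(A_2)\oplus K_3\oplus R(A_3^* )$, with $\|e\|^2_{H_2}=\|e_{A_1}\|^2+\|e_{K_2}\|^2+\|e_{A_2^*}\|^2$ and $\|h\|^2_{H_3}=\|h_{A_2}\|^2+\|h_{K_3}\|^2+\|h_{A_3^*}\|^2$; (ii) $e_{A_1}=x_g-\pi_{A_1}\tilde x$ and $\|e_{A_1}\|^2_{H_2}=\min_{\zeta\in D(A_1^* )}\big(c_1\|A_1^*\zeta-g\|_{H_1}+\|\zeta-\tilde x\|_{H_2}\big)^2=\max_{\varphi\in D(A_1)}\big(2\langle g,\varphi\rangle_{H_1}-\langle2\tilde x+A_1\varphi,A_1\varphi\rangle_{H_2}\big)$,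 attained at $\hat\zeta:=e_{A_1}+\tilde x\in D(A_1^* )$ (with $A_1^*\hat\zeta=g$) resp. $\hat\varphi:=(\mathcal{A}_1)^{-1}e_{A_1}$; (iii) $e_{A_2^*}=\pi_{A_2^*}x-\pi_{A_2^*}\tilde x$ and $$\|e_{A_2^*}\|^2_{H_2}=\min_{\xi\in D(A_2)}\min_{\zeta\in D(A_2^* )}\big(c_2^2\|A_2^*\zeta-f\|_{H_2}+c_2\|\zeta-A_2\xi\|_{H_3}+\|\xi-\tilde x\|_{H_2}\big)^2=\min_{\xi\in D(A_2^*A_2)}\big(c_2^2\|A_2^*A_2\xi-f\|_{H_2}+\|\xi-\tilde x\|_{H_2}\big)^2$$ $$=\max_{\phi\in D(A_2^*A_2)}\big(2\langle f,\phi\rangle_{H_2}-\langle2\tilde x+A_2^*A_2\phi,A_2^*A_2\phi\rangle_{H_2}\big),$$ where the minima are attained at $\hat\xi:=e_{A_2^*}+\tilde x\in D(A_2^*A_2)$ (with $A_2\hat\xi=y$, $A_2^*A_2\hat\xi=f$) together with $\hat\zeta:=y\in D(A_2^* )$ (with $A_2^*\hat\zeta=f$), and the maximum at $\hat\phi:=(\mathcal{A}_2)^{-1}(\mathcal{A}_2^* )^{-1}e_{A_2^*}$; (iv) $e_{K_2}=k-\pi_2\tilde x$ and $\|e_{K_2}\|^2_{H_2}=\min_{\varphi\in D(A_1)}\min_{\phi\in D(A_2^* )}\|k-\tilde x+A_1\varphi+A_2^*\phi\|^2_{H_2}=\max_{\theta\in K_2}\langle2(k-\tilde x)-\theta,\theta\rangle_{H_2}$,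 attained at $\hat\varphi:=(\mathcal{A}_1)^{-1}\pi_{A_1}\tilde x$, $\hat\phi:=(\mathcal{A}_2^* )^{-1}\pi_{A_2^*}\tilde x$ (with $A_1\hat\varphi+A_2^*\hat\phi=(1-\pi_2)\tilde x$) resp. $\hat\theta:=e_{K_2}$; (v) $h_{A_2}=y-\pi_{A_2}\tilde y$ and $\|h_{A_2}\|^2_{H_3}=\min_{\zeta\in D(A_2^* )}\big(c_2\|A_2^*\zeta-f\|_{H_2}+\|\zeta-\tilde y\|_{H_3}\big)^2=\max_{\varphi\in D(A_2)}\big(2\langle f,\varphi\rangle_{H_2}-\langle2\tilde y+A_2\varphi,A_2\varphi\rangle_{H_3}\big)$, attained at $\hat\zeta:=h_{A_2}+\tilde y\in D(A_2^* )$ (with $A_2^*\hat\zeta=f$) resp. $\hat\varphi:=(\mathcal{A}_2)^{-1}h_{A_2}$; (vi) $h_{A_3^*}=-\pi_{A_3^*}\tilde y$ and $\|h_{A_3^*}\|^2_{H_3}=\min_{\xi\in D(A_3)}\big(c_3\|A_3\xi\|_{H_4}+\|\xi-\tilde y\|_{H_3}\big)^2=\min_{\xi\in N(A_3)}\|\xi-\tilde y\|^2_{H_3}=\max_{\phi\in D(A_3^* )}\big(-\langle2\tilde y+A_3^*\phi,A_3^*\phi\rangle_{H_3}\big)$, attained at $\hat\xi:=h_{A_3^*}+\tilde y\in N(A_3)$ resp. $\hat\phi:=(\mathcal{A}_3^* )^{-1}h_{A_3^*}$; (vii) $h_{K_3}=-\pi_3\tilde y$ and $\|h_{K_3}\|^2_{H_3}=\min_{\varphi\in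 D(A_2)}\min_{\phi\in D(A_3^* )}\|-\tilde y+A_2\varphi+A_3^*\phi\|^2_{H_3}=\max_{\theta\in K_3}\big(-\langle2\tilde y+\theta,\theta\rangle_{H_3}\big)$, attained at $\hat\varphi:=(\mathcal{A}_2)^{-1}\pi_{A_2}\tilde y$, $\hat\phi:=(\mathcal{A}_3^* )^{-1}\pi_{A_3^*}\tilde y$ (with $A_2\hat\varphi+A_3^*\hat\phi=(1-\pi_3)\tilde y$) resp. $\hat\theta:=h_{K_3}$. If $\tilde x=k+\tilde x_\perp$ with $\tilde x_\perp\in K_2^\perp$, then $e_{K_2}=0$ and in (ii), (iii) $\tilde x$ can be replaced by $\tilde x_\perp$. If $\tilde y\in K_3^\perp$, then $h_{K_3}=0$ (and in (v), (vi) $\tilde y$ may be replaced by its $K_3^\perp$ component, i.e. by itself).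
   Context: Let $H_0,\dots,H_4$ be Hilbert spaces and, for $\ell=0,\dots,3$, $A_\ell:D(A_\ell)\subset H_\ell\to H_{\ell+1}$ densely defined closed linear operators with Hilbert space adjoints $A_\ell^*$, satisfying $R(A_\ell)\subset N(A_{\ell+1})$ for $\ell=0,1,2$. Standing assumption: $R(A_1)$, $R(A_2)$ closed and $K_2$ finite dimensional. $K_\ell:=N(A_\ell)\cap N(A_{\ell-1}^* )$, $\pi_\ell:H_\ell\to K_\ell$ orthogonal projectors ($\ell=2,3$); $\pi_{A_1},\pi_{A_2^*}$ orthogonal projectors of $H_2$ onto $R(A_1),R(A_2^* )$; $\pi_{A_2},\pi_{A_3^*}$ orthogonal projectors of $H_3$ onto $R(A_2),R(A_3^* )$. Reduced operators $\mathcal{A}_\ell:=A_\ell|_{D(A_\ell)\cap R(A_\ell^* )}$, $\mathcal{A}_\ell^*:=A_\ell^*|_{D(A_\ell^* )\cap R(A_\ell)}$ (injective). $x_g:=(\mathcal{A}_1^* )^{-1}g$. $c_\ell\in(0,\infty)$ is the best constant with $\|x\|_{H_\ell}\le c_\ell\|A_\ell x\|_{H_{\ell+1}}$ for all $x\in D(\mathcal{A}_\ell)$, $\ell=1,2,3$. $D(A_2^*A_2):=\{\xi\in D(A_2):A_2\xi\in D(A_2^* )\}$ and $D(\mathcal{A}_2^*\mathcal{A}_2)$ analogously. *)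

(* Defs.v *)
From HB Require Import structures.
From mathcomp Require Import all_boot all_order all_algebra.
From mathcomp Require Import reals.
Set Implicit Arguments. Unset Strict Implicit. Unset Printing Implicit Defensive.
Import Order.TTheory GRing.Theory Num.Theory.
Local Open Scope ring_scope.

Definition is_inner {R : realType} {V : lmodType R} (ip : V -> V -> R) : Prop :=
  (forall x y, ip x y = ip y x) /\
  (forall a x y z, ip (a *: x + y) z = a * ip x z + ip y z) /\
  (forall x, 0 <= ip x x) /\
  (forall x, ip x x = 0 -> x = 0).

Definition hnorm {R : realType} {V : lmodType R} (ip : V -> V -> R) (x : V) : R :=
  Num.sqrt (ip x x).

Definition converges {R : realType} {V : lmodType R} (ip : V -> V -> R)
  (u : nat -> V) (l : V) : Prop :=
  forall eps : R, 0 < eps -> exists N : nat, forall n, (N <= n)%N -> hnorm ip (u n - l) < eps.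

Definition cauchy_seq {R : realType} {V : lmodType R} (ip : V -> V -> R)
  (u : nat -> V) : Prop :=
  forall eps : R, 0 < eps -> exists N : nat,
    forall m n, (N <= m)%N -> (N <= n)%N -> hnorm ip (u m - u n) < eps.

Definition complete_ip {R : realType} {V : lmodType R} (ip : V -> V -> R) : Prop :=
  forall u, cauchy_seq ip u -> exists l, converges ip u l.

Definition is_hilbert {R : realType} {V : lmodType R} (ip : V -> V -> R) : Prop :=
  is_inner ip /\ complete_ip ip.

Definition subspace {R : realType} {V : lmodType R} (S : V -> Prop) : Prop :=
  S 0 /\ forall a x y, S x -> S y -> S (a *: x + y).

Definition closed_set {R : realType} {V : lmodType R} (ip : V -> V -> R)
  (S : V -> Prop) : Prop :=
  forall u l, (forall n, S (u n)) -> converges ip u l -> S l.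

Definition dense {R : realType} {V : lmodType R} (ip : V -> V -> R)
  (S : V -> Prop) : Prop :=
  forall x (eps : R), 0 < eps -> exists y, S y /\ hnorm ip (x - y) < eps.

Definition orth {R : realType} {V : lmodType R} (ip : V -> V -> R)
  (S : V -> Prop) : V -> Prop :=
  fun x => forall y, S y -> ip x y = 0.

Definition is_orth_proj {R : realType} {V : lmodType R} (ip : V -> V -> R)
  (S : V -> Prop) (P : V -> V) : Prop :=
  forall x, S (P x) /\ orth ip S (x - P x).

Definition fin_dim {R : realType} {V : lmodType R} (S : V -> Prop) : Prop :=
  exists (n : nat) (b : 'I_n -> V), forall x, S x ->
    exists c : 'I_n -> R, x = \sum_(i < n) c i *: b i.

Record op (R : realType) (U W : lmodType R) := Op {
  op_dom : U -> Prop;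
  op_app : U -> W }.

Definition linear_op {R : realType} {U W : lmodType R} (A : op U W) : Prop :=
  subspace (op_dom A) /\
  forall a x y, op_dom A x -> op_dom A y ->
    op_app A (a *: x + y) = a *: op_app A x + op_app A y.

Definition closed_op {R : realType} {U W : lmodType R}
  (ipU : U -> U -> R) (ipW : W -> W -> R) (A : op U W) : Prop :=
  forall u x y, (forall n, op_dom A (u n)) -> converges ipU u x ->
    converges ipW (fun n => op_app A (u n)) y -> op_dom A x /\ op_app A x = y.

Definition dd_closed {R : realType} {U W : lmodType R}
  (ipU : U -> U -> R) (ipW : W -> W -> R) (A : op U W) : Prop :=
  linear_op A /\ dense ipU (op_dom A) /\ closed_op ipU ipW A.

Definition is_adjoint {R : realType} {U W : lmodType R}
  (ipU : U -> U -> R) (ipW : W -> W -> R) (A : op U W) (As : op W U) : Prop :=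
  (forall y, op_dom As y <->
     exists z, forall x, op_dom A x -> ipW (op_app A x) y = ipU x z) /\
  (forall x y, op_dom A x -> op_dom As y -> ipW (op_app A x) y = ipU x (op_app As y)).

Definition op_range {R : realType} {U W : lmodType R} (A : op U W) : W -> Prop :=
  fun y => exists x, op_dom A x /\ op_app A x = y.

Definition op_ker {R : realType} {U W : lmodType R} (A : op U W) : U -> Prop :=
  fun x => op_dom A x /\ op_app A x = 0.

(* reduced operator: restriction of A to D(A) ∩ R(B) (B = A^* ) *)
Definition red {R : realType} {U W : lmodType R} (A : op U W) (B : op W U) : op U W :=
  Op (fun x => op_dom A x /\ op_range B x) (op_app A).

Definition comp_op {R : realType} {U W X : lmodType R} (B : op W X) (A : op U W) : op U X :=
  Op (fun x => op_dom A x /\ op_dom B (op_app A x)) (fun x => op_app B (op_app A x)).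

(* K_l = N(A_l) ∩ N(A_{l-1}^* ) *)
Definition harm {R : realType} {U W V' : lmodType R} (A : op U W) (Bs : op U V') : U -> Prop :=
  fun z => op_ker A z /\ op_ker Bs z.

Definition best_const {R : realType} {U W : lmodType R}
  (ipU : U -> U -> R) (ipW : W -> W -> R) (A : op U W) (As : op W U) (c : R) : Prop :=
  0 < c /\
  (forall x, op_dom (red A As) x -> hnorm ipU x <= c * hnorm ipW (op_app A x)) /\
  (forall c', (forall x, op_dom (red A As) x -> hnorm ipU x <= c' * hnorm ipW (op_app A x)) ->
     c <= c').

Definition attains_min {R : realType} {T : Type} (D : T -> Prop) (F : T -> R) (m : R) (z : T) : Prop :=
  D z /\ F z = m /\ forall w, D w -> m <= F w.

Definition attains_max {R : realType} {T : Type} (D : T -> Prop) (F : T -> R) (m : R) (z : T) : Prop :=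
  D z /\ F z = m /\ forall w, D w -> F w <= m.

(* Main.v *)
Require Import Defs.
From HB Require Import structures.
From mathcomp Require Import all_boot all_order all_algebra.
From mathcomp Require Import boolp classical_sets reals.
From mathcomp Require Import ring lra.
Set Implicit Arguments. Unset Strict Implicit. Unset Printing Implicit Defensive.
Import Order.TTheory GRing.Theory Num.Theory.
Local Open Scope ring_scope.


Section IP.
Variables (R : realType) (V : lmodType R) (ip : V -> V -> R).
Hypothesis Hip : is_inner ip.
Local Notation nr := (hnorm ip).

Lemma ipC x y : ip x y = ip y x.
Proof. by case: Hip. Qed.
Lemma ipZDl a x y z : ip (a *: x + y) z = a * ip x z + ip y z.
Proof. by case: Hip => _ [] H _. Qed.
Lemma ipDl x y z : ip (x + y) z = ip x z + ip y z.
Proof. by rewrite -[x]scale1r ipZDl mul1r scale1r. Qed.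
Lemma ip0l z : ip 0 z = 0.
Proof. have := ipDl 0 0 z; rewrite addr0 => h. apply: (addrI (ip 0 z)). by rewrite addr0 -h. Qed.
Lemma ipZl a x z : ip (a *: x) z = a * ip x z.
Proof. by rewrite -[a *: x]addr0 ipZDl ip0l addr0. Qed.
Lemma ipNl x z : ip (- x) z = - ip x z.
Proof. by rewrite -scaleN1r ipZl mulN1r. Qed.
Lemma ipDr x y z : ip z (x + y) = ip z x + ip z y.
Proof. by rewrite ipC ipDl ipC (ipC y). Qed.
Lemma ipZr a x z : ip z (a *: x) = a * ip z x.
Proof. by rewrite ipC ipZl ipC. Qed.
Lemma ipNr x z : ip z (- x) = - ip z x.
Proof. by rewrite ipC ipNl ipC. Qed.
Lemma ip0r z : ip z 0 = 0.
Proof. by rewrite ipC ip0l. Qed.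
Lemma ip_ge0 x : 0 <= ip x x.
Proof. by case: Hip => _ [] _ []. Qed.
Lemma ip_eq0 x : ip x x = 0 -> x = 0.
Proof. by case: Hip => _ [] _ [] _ H; apply: H. Qed.

Lemma nr_ge0 x : 0 <= nr x.
Proof. by rewrite /hnorm sqrtr_ge0. Qed.
Lemma nr_sq x : nr x ^+ 2 = ip x x.
Proof. by rewrite /hnorm sqr_sqrtr // ip_ge0. Qed.
Lemma nr0 : nr 0 = 0.
Proof. by rewrite /hnorm ip0l sqrtr0. Qed.
Lemma nr_eq0 x : nr x = 0 -> x = 0.
Proof. move=> h; apply: ip_eq0; by rewrite -nr_sq h expr0n. Qed.

Lemma CS2 x y : ip x y ^+ 2 <= ip x x * ip y y.
Proof.
have [y0|yn0] := eqVneq (ip y y) 0.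
  by rewrite (ip_eq0 y0) ip0r expr0n /= ip0r mulr0.
have yp : 0 < ip y y by rewrite lt_def yn0 ip_ge0.
set t := ip x y / ip y y.
have := ip_ge0 (x - t *: y).
rewrite !(ipDl, ipDr, ipNl, ipNr, ipZl, ipZr) (ipC y x).
rewrite -/t => h.
have e : t * ip y y = ip x y by rewrite /t mulfVK.
move: e yp; set a := ip x x; set b := ip x y; set c := ip y y.
move=> e yp.
have h2 : 0 <= a - t * b.
  by move: h; rewrite e subrr addr0.
have := mulr_ge0 h2 (ltW yp). rewrite mulrBl -mulrA (mulrC b) mulrA e.
rewrite subr_ge0 => h3. by rewrite expr2 mulrC.
Qed.

Lemma sq_le (b p : R) : 0 <= p -> b^+2 <= p^+2 -> b <= p.
Proof. nra. Qed.

Lemma CS x y : ip x y <= nr x * nr y.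
Proof.
have h := CS2 x y; rewrite -!nr_sq -exprMn in h.
apply: sq_le => //; apply: mulr_ge0; exact: nr_ge0.
Qed.

Lemma nrN x : nr (- x) = nr x.
Proof. by rewrite /hnorm ipNl ipNr opprK. Qed.
Lemma nrB x y : nr (x - y) = nr (y - x).
Proof. by rewrite -nrN opprB. Qed.
Lemma CSabs x y : `|ip x y| <= nr x * nr y.
Proof.
rewrite ler_norml CS andbT lerNl -ipNr.
by apply: le_trans (CS _ _) _; rewrite nrN.
Qed.

Lemma nrZ a x : nr (a *: x) = `|a| * nr x.
Proof. by rewrite /hnorm ipZl ipZr mulrA sqrtrM ?sqrtr_sqr // -expr2 sqr_ge0. Qed.

Lemma nr_sqD x y : nr (x + y) ^+ 2 = nr x ^+ 2 + 2 * ip x y + nr y ^+ 2.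
Proof. rewrite !nr_sq !(ipDl, ipDr) (ipC y x); ring. Qed.

Lemma nr_tri x y : nr (x + y) <= nr x + nr y.
Proof.
have h := nr_sqD x y; have c := CS x y.
have := nr_ge0 x; have := nr_ge0 y; have := nr_ge0 (x + y); nra.
Qed.

Lemma pyth a b : ip a b = 0 -> nr (a + b) ^+ 2 = nr a ^+ 2 + nr b ^+ 2.
Proof. by move=> h; rewrite nr_sqD h mulr0 addr0. Qed.

Lemma nr_le_sq a b : nr a ^+ 2 <= nr b ^+ 2 -> nr a <= nr b.
Proof. have := nr_ge0 a; have := nr_ge0 b; nra. Qed.

Lemma le_eps (r : R) : (forall eps : R, 0 < eps -> r <= eps) -> r <= 0.
Proof.
move=> h; case: (lerP r 0) => // rp.
have := h (r / 2) (divr_gt0 rp (ltr0Sn _ 1)); nra.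
Qed.

Lemma dense_orth (D : V -> Prop) w : dense ip D -> (forall d, D d -> ip w d = 0) -> w = 0.
Proof.
move=> hD hw; apply: nr_eq0.
have h : forall eps, 0 < eps -> nr w ^+ 2 <= nr w * eps.
  move=> eps he; have [d [Dd hd]] := hD w eps he.
  have -> : nr w ^+ 2 = ip w (w - d).
    by rewrite nr_sq ipDr ipNr (hw d Dd) oppr0 addr0.
  apply: le_trans (CS _ _) _; apply: ler_wpM2l; [exact: nr_ge0| exact: ltW].
apply/eqP; rewrite eq_le nr_ge0 andbT.
apply: le_eps => eps he.
have := h eps he; have := nr_ge0 w; nra.
Qed.

End IP.


Lemma eps_N (R : realType) (eps : R) : 0 < eps ->
  exists N : nat, forall n, (N <= n)%N -> (n.+1%:R)^-1 < eps.
Proof.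
move=> he; exists (Num.Def.archi_bound eps^-1) => n hn.
have h1 : eps^-1 < (Num.Def.archi_bound eps^-1)%:R by apply: archi_boundP; rewrite invr_ge0 ltW.
have h2 : (Num.Def.archi_bound eps^-1)%:R <= n%:R :> R by rewrite ler_nat.
have h3 : n%:R < n.+1%:R :> R by rewrite ltr_nat.
rewrite invf_plt ?posrE ?ltr0Sn //.
by apply: lt_le_trans h1 _; apply: ltW; apply: le_lt_trans h2 h3.
Qed.

Section Proj.
Variables (R : realType) (V : lmodType R) (ip : V -> V -> R).
Hypothesis Hip : is_inner ip.
Local Notation nr := (hnorm ip).
Variable S : V -> Prop.
Hypothesis HS : subspace S.

Lemma sub0 : S 0. Proof. by case: HS. Qed.
Lemma subZD a x y : S x -> S y -> S (a *: x + y). Proof. by case: HS => _ H; apply: H. Qed.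
Lemma subD x y : S x -> S y -> S (x + y).
Proof. by move=> hx hy; rewrite -[x]scale1r; apply: subZD. Qed.
Lemma subZ a x : S x -> S (a *: x).
Proof. by move=> hx; rewrite -[_ *: _]addr0; apply: subZD => //; apply: sub0. Qed.
Lemma subN x : S x -> S (- x).
Proof. by move=> hx; rewrite -scaleN1r; apply: subZ. Qed.
Lemma subB x y : S x -> S y -> S (x - y).
Proof. by move=> hx hy; apply: subD => //; apply: subN. Qed.

Lemma orthZD a x y : orth ip S x -> orth ip S y -> orth ip S (a *: x + y).
Proof. by move=> hx hy z hz; rewrite (ipZDl Hip) hx // hy // mulr0 addr0. Qed.
Lemma orthD x y : orth ip S x -> orth ip S y -> orth ip S (x + y).
Proof. by move=> hx hy; rewrite -[x]scale1r; apply: orthZD. Qed.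
Lemma orth0 : orth ip S 0.
Proof. by move=> z _; rewrite (ip0l Hip). Qed.
Lemma orthZ a x : orth ip S x -> orth ip S (a *: x).
Proof. by move=> hx; rewrite -[_ *: _]addr0; apply: orthZD => //; apply: orth0. Qed.
Lemma orthN x : orth ip S x -> orth ip S (- x).
Proof. by move=> hx; rewrite -scaleN1r; apply: orthZ. Qed.
Lemma orthB x y : orth ip S x -> orth ip S y -> orth ip S (x - y).
Proof. by move=> hx hy; apply: orthD => //; apply: orthN. Qed.

Lemma orth_sub_eq0 x : S x -> orth ip S x -> x = 0.
Proof. by move=> h1 h2; apply: (ip_eq0 Hip); apply: h2. Qed.

Variable P : V -> V.
Hypothesis HP : is_orth_proj ip S P.

Lemma projS v : S (P v). Proof. by case: (HP v). Qed.
Lemma projO v : orth ip S (v - P v). Proof. by case: (HP v). Qed.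

Lemma proj_char v a : S a -> orth ip S (v - a) -> P v = a.
Proof.
move=> ha hva; apply/eqP; rewrite -subr_eq0; apply/eqP.
apply: orth_sub_eq0; first by apply: subB => //; apply: projS.
have -> : P v - a = (v - a) - (v - P v).
  by rewrite opprB [RHS]addrC addrA subrK.
by apply: orthB => //; apply: projO.
Qed.

Lemma proj_id v : S v -> P v = v.
Proof. by move=> hv; apply: proj_char => //; rewrite subrr; apply: orth0. Qed.
Lemma proj_orth v : orth ip S v -> P v = 0.
Proof. by move=> hv; apply: proj_char; [apply: sub0 | rewrite subr0]. Qed.
Lemma projZD a u v : P (a *: u + v) = a *: P u + P v.
Proof.
apply: proj_char; first by apply: subZD; apply: projS.
have -> : a *: u + v - (a *: P u + P v) = a *: (u - P u) + (v - P v).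
  by rewrite scalerBr opprD addrACA.
by apply: orthZD; apply: projO.
Qed.
Lemma projD u v : P (u + v) = P u + P v.
Proof. by rewrite -[u]scale1r projZD !scale1r. Qed.
Lemma projZ a u : P (a *: u) = a *: P u.
Proof. have := projZD a u 0; rewrite !addr0 (proj_id sub0) addr0; exact. Qed.
Lemma projN u : P (- u) = - P u.
Proof. by rewrite -scaleN1r projZ scaleN1r. Qed.
Lemma projB u v : P (u - v) = P u - P v.
Proof. by rewrite projD projN. Qed.
Lemma proj_ip v s : S s -> ip v s = ip (P v) s.
Proof.
move=> hs; have := projO v hs; rewrite (ipDl Hip) (ipNl Hip) => /eqP.
by rewrite subr_eq0 => /eqP.
Qed.
Lemma proj_contr v : nr (P v) <= nr v.
Proof.
apply: nr_le_sq.
have -> : nr v ^+ 2 = nr (P v + (v - P v)) ^+ 2 by rewrite addrC subrK.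
rewrite (pyth Hip).
  by rewrite lerDl exprn_ge0 // nr_ge0.
by rewrite (ipC Hip); apply: projO; apply: projS.
Qed.

End Proj.


Section PT.
Variables (R : realType) (V : lmodType R) (ip : V -> V -> R).
Hypothesis Hip : is_inner ip.
Local Notation nr := (hnorm ip).

Lemma parallel a b : nr (a - b) ^+ 2 + nr (a + b) ^+ 2 = 2 * nr a ^+ 2 + 2 * nr b ^+ 2.
Proof.
rewrite !(nr_sq Hip) !(ipDl Hip, ipDr Hip, ipNl Hip, ipNr Hip) (ipC Hip b a); ring.
Qed.

Lemma nr_tri3 a b c : nr (a - c) <= nr (a - b) + nr (b - c).
Proof.
have -> : a - c = (a - b) + (b - c) by rewrite addrA subrK.
exact: (nr_tri Hip).
Qed.

Lemma conv_cauchy u l : converges ip u l -> cauchy_seq ip u.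
Proof.
move=> hu eps he.
have [N hN] := hu (eps / 2) (divr_gt0 he (ltr0Sn _ 1)).
exists N => m n hm hn.
apply: le_lt_trans (nr_tri3 _ (l) _) _.
rewrite (nrB Hip l).
have := hN m hm; have := hN n hn; lra.
Qed.

Lemma nrZ2 t z : nr (t *: z) ^+ 2 = t ^+ 2 * nr z ^+ 2.
Proof. by rewrite !(nr_sq Hip) (ipZl Hip) (ipZr Hip) mulrA expr2. Qed.

Lemma vec_mid (x a b : V) : (x - a) + (x - b) = 2 *: (x - 2^-1 *: (a + b)).
Proof.
rewrite scalerBr scalerA mulfV ?pnatr_eq0 // scale1r scaler_nat mulr2n.
by rewrite opprD addrACA.
Qed.

Lemma proj_exists (Hc : complete_ip ip) (S : V -> Prop) (HS : subspace S)
  (Hcl : closed_set ip S) x : exists p, S p /\ orth ip S (x - p).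
Proof.
pose D : set R := fun r => exists s, S s /\ r = nr (x - s).
have hne : (D !=set0)%classic by exists (nr (x - 0)); exists 0; split => //; apply: sub0.
have hlb : has_lbound D by exists 0 => r [s [_ ->]]; exact: nr_ge0.
set d := inf D.
have dlb : forall s, S s -> d <= nr (x - s).
  by move=> s hs; apply: (ge_inf hlb); exists s.
have d0 : 0 <= d by apply: lb_le_inf => // r [s [_ ->]]; exact: nr_ge0.
have hseq : forall n : nat, exists s, S s /\ nr (x - s) < d + (n.+1%:R)^-1.
  move=> n; have hpos : 0 < (n.+1%:R)^-1 :> R by rewrite invr_gt0 ltr0Sn.
  have [e [s [hs ->]] he] := inf_adherent hpos (conj hne hlb).
  by exists s.
case: (choice hseq) => s hs.
have epsle1 : forall n : nat, (n.+1%:R)^-1 <= 1 :> R.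
  by move=> n; rewrite invf_le1 ?ltr0Sn // ler1n.
have epsge0 : forall n : nat, 0 <= (n.+1%:R)^-1 :> R.
  by move=> n; rewrite invr_ge0 ler0n.
have hcs : cauchy_seq ip s.
  move=> eps he.
  have h4 : 0 < 4 * d + 2 by have := d0; lra.
  have [N hN] := eps_N (divr_gt0 (mulr_gt0 he he) (mulr_gt0 (ltr0Sn _ 1) h4)).
  exists N => m n hm hn.
  have hpar := parallel (x - s n) (x - s m).
  have eq1 : x - s n - (x - s m) = s m - s n by rewrite opprB addrC addrA subrK.
  rewrite eq1 vec_mid nrZ2 in hpar.
  have hmid := dlb _ (subZ HS (2^-1) (subD HS (hs n).1 (hs m).1)).
  have hmid2 : d ^+ 2 <= nr (x - 2^-1 *: (s n + s m)) ^+ 2.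
    by rewrite ler_sqr ?nnegrE ?nr_ge0.
  have hn1 := (hs n).2; have hm1 := (hs m).2.
  have hn2 := dlb _ (hs n).1; have hm2 := dlb _ (hs m).1.
  have en := hN n hn; have em := hN m hm.
  have e1 := epsle1 n; have e2 := epsle1 m; have e3 := epsge0 n; have e4 := epsge0 m.
  move: hpar hmid2 hn1 hm1 hn2 hm2 en em e1 e2 e3 e4.
  set a := nr (x - s n); set b := nr (x - s m); set c := nr (s m - s n).
  set w := nr (x - _); set en := (n.+1%:R)^-1; set em := (m.+1%:R)^-1.
  move=> hpar hmid2 hn1 hm1 hn2 hm2 ben bem e1 e2 e3 e4.
  have hc : c ^+ 2 < eps ^+ 2.
    have hb : c ^+ 2 <= (4 * d + 2) * (en + em) by nra.
    have : (4 * d + 2) * (en + em) < eps ^+ 2.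
      have q0 : 0 < 2 * (4 * d + 2) by lra.
      rewrite ltr_pdivlMr // in ben; rewrite ltr_pdivlMr // in bem.
      nra.
    lra.
  have := nr_ge0 ip (s m - s n); rewrite -/c => c0.
  nra.
case: (Hc s hcs) => p hp.
have Sp : S p by apply: (Hcl s p) => // n; exact: (hs n).1.
have hd : nr (x - p) <= d.
  rewrite -subr_le0; apply: le_eps => eps he.
  have [N1 hN1] := eps_N (divr_gt0 he (ltr0Sn _ 1)).
  have [N2 hN2] := hp (eps / 2) (divr_gt0 he (ltr0Sn _ 1)).
  set k := maxn N1 N2.
  have h1 : (k.+1%:R)^-1 < eps / 2 := hN1 k (leq_maxl _ _).
  have h2 : nr (s k - p) < eps / 2 := hN2 k (leq_maxr _ _).
  have h3 : nr (x - s k) < d + (k.+1%:R)^-1 := (hs k).2.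
  have h4 : nr (x - p) <= nr (x - s k) + nr (s k - p) := nr_tri3 x (s k) p.
  move: h1 h2 h3 h4; set a1 := nr (x - p); set a2 := nr (x - s k); set a3 := nr (s k - p) => h1 h2 h3 h4. move: h1 h3; set e := (k.+1%:R)^-1 => h1 h3. clearbody d. lra.
exists p; split => // z hz.
set b := ip (x - p) z.
set c := nr z ^+ 2.
have c0 : 0 <= c by rewrite /c exprn_ge0 // nr_ge0.
have key : forall t, 0 <= - 2 * t * b + t ^+ 2 * c.
  move=> t.
  have hq := dlb _ (subD HS Sp (subZ HS t hz)).
  have e : x - (p + t *: z) = (x - p) + ((- t) *: z) by rewrite scaleNr opprD addrA.
  have h1 : nr (x - p) ^+ 2 <= nr (x - (p + t *: z)) ^+ 2.
    rewrite ler_sqr ?nnegrE ?nr_ge0 //; exact: le_trans hd hq.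
  rewrite e [X in _ <= X](nr_sqD Hip) nrZ2 (ipZr Hip) -/b sqrrN -/c in h1.
  lra.
have := key (b / (c + 1)).
have u0 : 0 < c + 1 by lra.
set t := b / (c + 1).
have et : t * (c + 1) = b by rewrite /t mulfVK // gt_eqF.
move=> h.
have : t = 0 by nra.
by move=> t0; rewrite -et t0 mul0r.
Qed.


Lemma nat_pow3 n : (n.+1 <= 3 ^ n)%N.
Proof.
elim: n => // n ih; rewrite expnS.
move: ih; set X := (3 ^ n)%N => ih.
rewrite !mulSn mul0n addn0 -addn1 leq_add //.
by apply: leq_trans (leq_addr _ _); apply: leq_trans ih.
Qed.

Definition r3 (n : nat) : R := (3 ^+ n)^-1.

Lemma r3_gt0 n : 0 < r3 n.
Proof. by rewrite /r3 invr_gt0 exprn_gt0. Qed.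
Lemma r3S n : r3 n = 3 * r3 n.+1.
Proof. by rewrite /r3 exprS invfM mulrA mulfV ?mul1r // pnatr_eq0. Qed.
Lemma r3_le n : r3 n <= (n.+1%:R)^-1.
Proof.
rewrite /r3 lef_pV2 ?posrE ?exprn_gt0 ?ltr0Sn //.
by rewrite -natrX ler_nat nat_pow3.
Qed.

Fixpoint useq (zs : nat -> V) (n : nat) : V :=
  match n with
  | 0 => 0
  | m.+1 => useq zs m + (((if 0 <= ip (useq zs m) (zs m) then 1 else -1) * r3 m.+1)
             / nr (zs m)) *: zs m
  end.

Lemma ubp (Hc : complete_ip ip) (Sset : V -> Prop) :
  (forall w, exists M : R, forall z, Sset z -> `|ip w z| <= M) ->
  exists C, forall z, Sset z -> nr z <= C.
Proof.
move=> hw; apply: contrapT => hnC.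
have hb : forall n : nat, exists z, Sset z /\ 2 * n.+1%:R / r3 n.+1 < nr z.
  move=> n; apply: contrapT => h2; apply: hnC; exists (2 * n.+1%:R / r3 n.+1) => z hz.
  rewrite leNgt; apply/negP => hc; apply: h2; by exists z.
case: (choice hb) => zs hzs.
pose xs := useq zs.
have zpos : forall n, 0 < nr (zs n).
  move=> n; apply: lt_trans (hzs n).2.
  by rewrite divr_gt0 ?r3_gt0 // mulr_gt0 ?ltr0Sn.
have K1 : forall m, r3 m.+1 * nr (zs m) <= `|ip (xs m.+1) (zs m)|.
  move=> m; rewrite /xs /= (ipDl Hip) (ipZl Hip) -(nr_sq Hip).
  set a := ip _ _; set z := nr (zs m).
  have z0 := zpos m; rewrite -/z in z0.
  have e : forall s, s * r3 m.+1 / z * z ^+ 2 = s * r3 m.+1 * z.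
    by move=> s; rewrite expr2 mulrA mulfVK // gt_eqF.
  have r0 := r3_gt0 m.+1.
  have q0 : 0 < r3 m.+1 * z := mulr_gt0 r0 z0.
  case: ifP => ha; rewrite e ?mul1r ?mulN1r ?mulNr; move: q0; set q := r3 m.+1 * z => q0.
    rewrite ger0_norm; lra.
  have : a < 0 by rewrite ltNge ha.
  move=> a0; rewrite ler0_norm; lra.
have K2 : forall m, nr (xs m.+1 - xs m) = r3 m.+1.
  move=> m; rewrite /xs /= addrAC subrr add0r (nrZ Hip) normrM normrM.
  have zi : 0 < (nr (zs m))^-1 by rewrite invr_gt0 zpos.
  rewrite (ger0_norm (ltW (r3_gt0 _))) (ger0_norm (ltW zi)).
  have -> : `|(if 0 <= ip (useq zs m) (zs m) then 1 else -1) : R| = 1.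
    by case: ifP => _; rewrite ?normrN normr1.
  by rewrite mul1r -mulrA mulVf ?mulr1 // gt_eqF ?zpos.
have K3 : forall n m, nr (xs (n + m)%N - xs n) <= (r3 n - r3 (n + m)%N) / 2.
  move=> n; elim => [|m ih].
    by rewrite addn0 subrr (nr0 Hip) subrr mul0r.
  have t : nr (xs (n + m.+1)%N - xs n) <=
     nr (xs (n + m.+1)%N - xs (n + m)%N) + nr (xs (n + m)%N - xs n) := nr_tri3 _ _ _.
  rewrite addnS K2 in t.
  have e := r3S (n + m)%N.
  rewrite addnS.
  move: t ih e; set a := nr (xs (n + m).+1 - xs n); set c := nr (xs (n + m)%N - xs n).
  set p := r3 (n+m)%N; set q := r3 (n+m).+1; set o := r3 n.
  move=> t ih e; lra.
have K4 : forall n m, (n <= m)%N -> nr (xs m - xs n) <= r3 n / 2.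
  move=> n m hnm; rewrite -(subnKC hnm).
  apply: le_trans (K3 _ _) _.
  have := r3_gt0 (n + (m - n))%N; set p := r3 _; set o := r3 n; lra.
have hcs : cauchy_seq ip xs.
  move=> eps he; have [N hN] := eps_N he.
  exists N => m n hm hn.
  have t := nr_tri3 (xs m) (xs N) (xs n).
  have t1 := K4 _ _ hm; have t2 := K4 _ _ hn.
  rewrite (nrB Hip (xs N)) in t.
  have t3 := hN N (leqnn N); have t4 := r3_le N.
  move: t t1 t2 t3 t4; set a := nr (xs m - xs n); set b := nr (xs m - xs N).
  set c := nr (xs n - xs N); set o := r3 N; set e := (N.+1%:R)^-1.
  move=> t t1 t2 t3 t4; lra.
case: (Hc xs hcs) => xl hxl.
have K5 : forall n, nr (xl - xs n) <= r3 n / 2.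
  move=> n; rewrite -subr_le0; apply: le_eps => eps he.
  have [N hN] := hxl eps he.
  have t1 := hN (maxn n N) (leq_maxr _ _).
  have t2 := K4 _ _ (leq_maxl n N).
  have t := nr_tri3 xl (xs (maxn n N)) (xs n).
  rewrite (nrB Hip xl (xs (maxn n N))) in t.
  move: t t1 t2; set a := nr (xl - xs n); set b := nr (xs (maxn n N) - xl).
  set c := nr (xs (maxn n N) - xs n); set o := r3 n.
  move=> t t1 t2; lra.
case: (hw xl) => M hM.
have [n hn] : exists n : nat, M < n.+1%:R.
  exists (Num.Def.archi_bound `|M|).
  apply: le_lt_trans (ler_norm M) _.
  apply: lt_trans (archi_boundP (normr_ge0 M)) _.
  by rewrite ltr_nat.
have b1 := hM _ (hzs n).1.
have b2 := K1 n.
have b3 := CSabs Hip (xs n.+1 - xl) (zs n).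
have b4 := K5 n.+1.
rewrite (nrB Hip) in b3.
have b5 := lerB_dist (ip (xs n.+1) (zs n)) (ip (xs n.+1 - xl) (zs n)).
have e : ip (xs n.+1) (zs n) - ip (xs n.+1 - xl) (zs n) = ip xl (zs n).
  by rewrite (ipDl Hip) (ipNl Hip) opprD opprK addrA subrr add0r.
rewrite e in b5.
have b6 := (hzs n).2.
have r0 := r3_gt0 n.+1.
have e2 : r3 n.+1 * (2 * n.+1%:R / r3 n.+1) = 2 * n.+1%:R by rewrite mulrC mulfVK // gt_eqF.
have z0 := zpos n.
move: b1 b2 b3 b4 b5 b6 e2 z0.
set A1 := `|ip xl (zs n)|; set A2 := `|ip (xs n.+1) (zs n)|; set A3 := `|ip (xs n.+1 - xl) (zs n)|.
set zz := nr (zs n); set d := nr (xl - xs n.+1); set rr := r3 n.+1; set K := 2 * n.+1%:R / rr.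
set nn := n.+1%:R.
move=> b1 b2 b3 b4 b5 b6 e2 z0.
have : rr * K < rr * zz by rewrite ltr_pM2l.
nra.
Qed.

End PT.


Lemma hnorm_le_ip (R : realType) (U W : lmodType R) (ip1 : U -> U -> R) (ip2 : W -> W -> R) a b :
  0 <= ip2 b b -> ip1 a a <= ip2 b b -> hnorm ip1 a <= hnorm ip2 b.
Proof. by move=> h0 h; rewrite /hnorm ler_sqrt. Qed.

Section Prod.
Variables (R : realType) (U W : lmodType R) (ipU : U -> U -> R) (ipW : W -> W -> R).
Hypothesis (HU : is_hilbert ipU) (HW : is_hilbert ipW).
Definition ipP (p q : U * W) : R := ipU p.1 q.1 + ipW p.2 q.2.

Lemma ipP_inner : is_inner ipP.
Proof.
have HiU := HU.1; have HiW := HW.1.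
split; first by move=> x y; rewrite /ipP (ipC HiU) (ipC HiW).
split; first by move=> a x y z; rewrite /ipP /= (ipZDl HiU) (ipZDl HiW); ring.
split; first by move=> x; rewrite /ipP addr_ge0 // ip_ge0.
move=> [x1 x2] /= h.
have h1 := ip_ge0 HiU x1; have h2 := ip_ge0 HiW x2.
rewrite /ipP /= in h.
have e1 : ipU x1 x1 = 0 by lra.
have e2 : ipW x2 x2 = 0 by lra.
by rewrite (ip_eq0 HiU e1) (ip_eq0 HiW e2).
Qed.

Lemma ipP_complete : complete_ip ipP.
Proof.
have HiU := HU.1; have HiW := HW.1; have HiP := ipP_inner.
move=> u hu.
have c1 : cauchy_seq ipU (fun n => (u n).1).
  move=> eps he; have [N hN] := hu eps he; exists N => m n hm hn.
  apply: le_lt_trans (hN m n hm hn).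
  apply: hnorm_le_ip; first exact: ip_ge0.
  rewrite /ipP /= lerDl; exact: ip_ge0.
have c2 : cauchy_seq ipW (fun n => (u n).2).
  move=> eps he; have [N hN] := hu eps he; exists N => m n hm hn.
  apply: le_lt_trans (hN m n hm hn).
  apply: hnorm_le_ip; first exact: ip_ge0.
  rewrite /ipP /= lerDr; exact: ip_ge0.
case: (HU.2 _ c1) => l1 hl1; case: (HW.2 _ c2) => l2 hl2.
exists (l1, l2) => eps he.
have he2 : 0 < eps / 2 by rewrite divr_gt0.
have [N1 hN1] := hl1 _ he2; have [N2 hN2] := hl2 _ he2.
exists (maxn N1 N2) => n hn.
have a1 := hN1 n (leq_trans (leq_maxl _ _) hn).
have a2 := hN2 n (leq_trans (leq_maxr _ _) hn).
have e : hnorm ipP (u n - (l1, l2)) ^+ 2 =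
   hnorm ipU ((u n).1 - l1) ^+ 2 + hnorm ipW ((u n).2 - l2) ^+ 2.
  by rewrite !nr_sq.
have g1 := nr_ge0 ipU ((u n).1 - l1); have g2 := nr_ge0 ipW ((u n).2 - l2).
have g3 := nr_ge0 ipP (u n - (l1, l2)).
move: e a1 a2 g1 g2 g3.
set a := hnorm ipP _; set b := hnorm ipU _; set c := hnorm ipW _ => e a1 a2 g1 g2 g3.
nra.
Qed.

End Prod.

Section Op.
Variables (R : realType) (U W : lmodType R) (ipU : U -> U -> R) (ipW : W -> W -> R).
Hypothesis (HU : is_hilbert ipU) (HW : is_hilbert ipW).
Variables (A : op U W) (As : op W U).
Hypothesis (HA : dd_closed ipU ipW A) (HAs : is_adjoint ipU ipW A As).

Let HiU : is_inner ipU := HU.1.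
Let HiW : is_inner ipW := HW.1.

Lemma Adom_sub : subspace (op_dom A). Proof. by case: HA => [[]]. Qed.
Lemma A_ZD a x y : op_dom A x -> op_dom A y ->
  op_app A (a *: x + y) = a *: op_app A x + op_app A y.
Proof. by case: HA => [[_ H]] _; apply: H. Qed.
Lemma A_D x y : op_dom A x -> op_dom A y -> op_app A (x + y) = op_app A x + op_app A y.
Proof. by move=> hx hy; rewrite -[x]scale1r A_ZD // !scale1r. Qed.
Lemma A_0 : op_app A 0 = 0.
Proof.
have h0 := sub0 Adom_sub; have := A_D h0 h0; rewrite addr0 => h.
by apply: (addrI (op_app A 0)); rewrite addr0 -h.
Qed.
Lemma A_Z a x : op_dom A x -> op_app A (a *: x) = a *: op_app A x.
Proof. by move=> hx; rewrite -[a *: x]addr0 A_ZD // ?A_0 ?addr0 //; apply: sub0 Adom_sub. Qed.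
Lemma A_N x : op_dom A x -> op_app A (- x) = - op_app A x.
Proof. by move=> hx; rewrite -scaleN1r A_Z // scaleN1r. Qed.
Lemma A_B x y : op_dom A x -> op_dom A y -> op_app A (x - y) = op_app A x - op_app A y.
Proof. by move=> hx hy; rewrite A_D ?A_N //; apply: subN Adom_sub _ hy. Qed.
Lemma A_dense : dense ipU (op_dom A). Proof. by case: HA => _ []. Qed.
Lemma A_closed : closed_op ipU ipW A. Proof. by case: HA => _ []. Qed.

Lemma adj_id x y : op_dom A x -> op_dom As y -> ipW (op_app A x) y = ipU x (op_app As y).
Proof. by case: HAs => _ H; apply: H. Qed.

Lemma adj_dom_char y : op_dom As y <-> exists z, forall x, op_dom A x -> ipW (op_app A x) y = ipU x z.
Proof. by case: HAs. Qed.

Lemma adj_uniq y z : op_dom As y -> (forall x, op_dom A x -> ipW (op_app A x) y = ipU x z) ->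
  op_app As y = z.
Proof.
move=> hy hz; apply/eqP; rewrite -subr_eq0; apply/eqP.
apply: (dense_orth HiU A_dense) => x hx.
by rewrite (ipC HiU) (ipDr HiU) (ipNr HiU) -adj_id // hz // subrr.
Qed.

Lemma adj_dom_sub : subspace (op_dom As).
Proof.
split.
  apply/adj_dom_char; exists 0 => x hx; by rewrite (ip0r HiW) (ip0r HiU).
move=> a y1 y2 /adj_dom_char [z1 h1] /adj_dom_char [z2 h2].
apply/adj_dom_char; exists (a *: z1 + z2) => x hx.
by rewrite (ipDr HiW) (ipZr HiW) h1 // h2 // (ipDr HiU) (ipZr HiU).
Qed.

Lemma adj_ZD a y1 y2 : op_dom As y1 -> op_dom As y2 ->
  op_app As (a *: y1 + y2) = a *: op_app As y1 + op_app As y2.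
Proof.
move=> h1 h2; apply: adj_uniq; first exact: subZD adj_dom_sub _ _ _ h1 h2.
move=> x hx.
by rewrite (ipDr HiW) (ipZr HiW) !adj_id // (ipDr HiU) (ipZr HiU).
Qed.

Lemma adj_linear : linear_op As.
Proof. split; [exact: adj_dom_sub | move=> *; exact: adj_ZD]. Qed.

Lemma range_sub : subspace (op_range A).
Proof.
split; first by exists 0; split; [apply: sub0 Adom_sub | exact: A_0].
move=> a _ _ [x1 [h1 <-]] [x2 [h2 <-]].
exists (a *: x1 + x2); split; [exact: subZD Adom_sub _ _ _ h1 h2 | exact: A_ZD].
Qed.

Lemma F1a y : op_ker As y -> orth ipW (op_range A) y.
Proof.
move=> [hy hy0] _ [x [hx <-]].
by rewrite (ipC HiW) adj_id // hy0 (ip0r HiU).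
Qed.

Lemma F1b y : orth ipW (op_range A) y -> op_ker As y.
Proof.
move=> hy.
have hd : op_dom As y.
  apply/adj_dom_char; exists 0 => x hx.
  rewrite (ip0r HiU) (ipC HiW); apply: hy; by exists x.
split => //; apply: adj_uniq => // x hx.
rewrite (ip0r HiU) (ipC HiW); apply: hy; by exists x.
Qed.

Lemma kerA_orth x : op_ker A x -> orth ipU (op_range As) x.
Proof.
move=> [hx hx0] _ [y [hy <-]].
by rewrite -adj_id // hx0 (ip0l HiW).
Qed.

Lemma F2 x : orth ipU (op_range As) x -> op_ker A x.
Proof.
move=> hx.
pose G := fun p : U * W => op_dom A p.1 /\ op_app A p.1 = p.2.
have HiP := ipP_inner HU HW.
have GS : subspace G.
  split; first by split; [apply: sub0 Adom_sub | exact: A_0].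
  move=> a [p1 p2] [q1 q2] [/= h1 <-] [/= h2 <-]; split => /=.
    exact: subZD Adom_sub _ _ _ h1 h2.
  exact: A_ZD.
have Gcl : closed_set (ipP ipU ipW) G.
  move=> u l hu hl.
  have c1 : converges ipU (fun n => (u n).1) l.1.
    move=> eps he; have [N hN] := hl eps he; exists N => n hn.
    apply: le_lt_trans (hN n hn); apply: hnorm_le_ip; first exact: ip_ge0.
    rewrite /ipP /= lerDl; exact: ip_ge0.
  have c2 : converges ipW (fun n => op_app A (u n).1) l.2.
    move=> eps he; have [N hN] := hl eps he; exists N => n hn.
    apply: le_lt_trans (hN n hn); apply: hnorm_le_ip; first exact: ip_ge0.
    rewrite (hu n).2 /ipP /= lerDr; exact: ip_ge0.
  have hd : forall n, op_dom A (u n).1 by move=> n; exact: (hu n).1.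
  have [h1 h2] := A_closed hd c1 c2.
  by split.
have [[u w] [[/= hu hw] ho]] := proj_exists HiP (ipP_complete HU HW) GS Gcl (x, 0).
have key : forall v, op_dom A v -> ipW (op_app A v) w = ipU v (x - u).
  move=> v hv; have := ho (v, op_app A v) (conj hv erefl).
  rewrite /ipP /= (ipC HiU) (ipDl HiW) (ipNl HiW) (ip0l HiW) add0r (ipC HiW) => h.
  by apply/eqP; rewrite eq_sym -subr_eq0 h.
have hwd : op_dom As w by apply/adj_dom_char; exists (x - u).
have hAw : op_app As w = x - u by apply: adj_uniq.
have h1 : ipU x (x - u) = 0.
  by apply: hx; exists w; split.
have h2 : ipU u (x - u) = ipW w w by rewrite -hAw -adj_id // hw.
have h3 : ipU (x - u) (x - u) = - ipW w w.
  by rewrite (ipDl HiU) (ipNl HiU) h1 h2 add0r.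
have g1 := ip_ge0 HiU (x - u); have g2 := ip_ge0 HiW w.
have e1 : ipU (x - u) (x - u) = 0 by lra.
have e2 : ipW w w = 0 by lra.
have xu : x = u by apply/eqP; rewrite -subr_eq0; apply/eqP; exact: ip_eq0 HiU _ e1.
subst x; split => //; rewrite hw; exact: ip_eq0 HiW _ e2.
Qed.

Lemma adj_closed : closed_op ipW ipU As.
Proof.
move=> u y z hu hy hz.
have key : forall x, op_dom A x -> ipW (op_app A x) y = ipU x z.
  move=> x hx; apply/eqP; rewrite -subr_eq0; apply/eqP.
  set r := _ - _.
  have : `|r| <= 0.
    apply: le_eps => eps he.
    set a := hnorm ipW (op_app A x) + 1; set b := hnorm ipU x + 1.
    have a0 : 0 < a by rewrite /a ltr_pwDr ?ltr01 ?nr_ge0.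
    have b0 : 0 < b by rewrite /b ltr_pwDr ?ltr01 ?nr_ge0.
    have [N1 hN1] := hy (eps / 2 / a) (divr_gt0 (divr_gt0 he (ltr0Sn _ 1)) a0).
    have [N2 hN2] := hz (eps / 2 / b) (divr_gt0 (divr_gt0 he (ltr0Sn _ 1)) b0).
    set n := maxn N1 N2.
    have k1 := hN1 n (leq_maxl _ _); have k2 := hN2 n (leq_maxr _ _).
    have e : r = ipW (op_app A x) (y - u n) + ipU x (op_app As (u n) - z).
      rewrite /r (ipDr HiW) (ipNr HiW) (adj_id hx (hu n)) (ipDr HiU) (ipNr HiU).
      by rewrite addrA subrK.
    have c1 := CSabs HiW (op_app A x) (y - u n).
    have c2 := CSabs HiU x (op_app As (u n) - z).
    rewrite (nrB HiW) in c1.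
    have t := ler_normD (ipW (op_app A x) (y - u n)) (ipU x (op_app As (u n) - z)).
    rewrite -e in t.
    rewrite ltr_pdivlMr // in k1; rewrite ltr_pdivlMr // in k2.
    have g1 := nr_ge0 ipW (op_app A x); have g2 := nr_ge0 ipU x.
    have g3 := nr_ge0 ipW (u n - y); have g4 := nr_ge0 ipU (op_app As (u n) - z).
    move: c1 c2 t k1 k2 g1 g2 g3 g4; rewrite /a /b.
    set p1 := hnorm ipW (op_app A x); set p2 := hnorm ipU x.
    set p3 := hnorm ipW (u n - y); set p4 := hnorm ipU (op_app As (u n) - z).
    set q1 := `|ipW _ _|; set q2 := `|ipU _ _|.
    move=> c1 c2 t k1 k2 g1 g2 g3 g4.
    nra.
  by rewrite normr_le0 => /eqP.
have hd : op_dom As y by apply/adj_dom_char; exists z.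
by split => //; apply: adj_uniq.
Qed.


Lemma As_D x y : op_dom As x -> op_dom As y -> op_app As (x + y) = op_app As x + op_app As y.
Proof. by move=> hx hy; rewrite -[x]scale1r adj_ZD // !scale1r. Qed.
Lemma As_0 : op_app As 0 = 0.
Proof.
have h0 := sub0 adj_dom_sub; have := As_D h0 h0; rewrite addr0 => h.
by apply: (addrI (op_app As 0)); rewrite addr0 -h.
Qed.
Lemma As_Z a x : op_dom As x -> op_app As (a *: x) = a *: op_app As x.
Proof. by move=> hx; rewrite -[a *: x]addr0 adj_ZD // ?As_0 ?addr0 //; apply: sub0 adj_dom_sub. Qed.
Lemma As_N x : op_dom As x -> op_app As (- x) = - op_app As x.
Proof. by move=> hx; rewrite -scaleN1r As_Z // scaleN1r. Qed.
Lemma As_B x y : op_dom As x -> op_dom As y -> op_app As (x - y) = op_app As x - op_app As y.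
Proof. by move=> hx hy; rewrite As_D ?As_N //; apply: subN adj_dom_sub _ hy. Qed.

Lemma range_subs : subspace (op_range As).
Proof.
split; first by exists 0; split; [apply: sub0 adj_dom_sub | exact: As_0].
move=> a _ _ [x1 [h1 <-]] [x2 [h2 <-]].
exists (a *: x1 + x2); split; [exact: subZD adj_dom_sub _ _ _ h1 h2 | exact: adj_ZD].
Qed.

Lemma pre_from_closed (HRs : closed_set ipU (op_range As)) w :
  op_range A w -> exists u, op_dom (red A As) u /\ op_app A u = w.
Proof.
move=> [u0 [hu0 <-]].
have [p [hp ho]] := proj_exists HiU HU.2 range_subs HRs u0.
have [hk hk0] := F2 ho.
have hpd : op_dom A p by have := subB Adom_sub hu0 hk; rewrite opprB addrC subrK.
exists p; split; first by split.
have := A_B hu0 hpd; rewrite hk0 => /eqP; rewrite eq_sym subr_eq0 => /eqP.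
by [].
Qed.

Lemma pre_adj (HR : closed_set ipW (op_range A)) w :
  op_range As w -> exists v, op_dom (red As A) v /\ op_app As v = w.
Proof.
move=> [v0 [hv0 <-]].
have [p [hp ho]] := proj_exists HiW HW.2 range_sub HR v0.
have [hk hk0] := F1b ho.
have hpd : op_dom As p by have := subB adj_dom_sub hv0 hk; rewrite opprB addrC subrK.
exists p; split; first by split.
have := As_B hv0 hpd; rewrite hk0 => /eqP; rewrite eq_sym subr_eq0 => /eqP.
by [].
Qed.

Lemma crt_closed (HR : closed_set ipW (op_range A)) : closed_set ipU (op_range As).
Proof.
pose Sset := fun z => op_dom As z /\ op_range A z /\ hnorm ipU (op_app As z) <= 1.
have wb : forall w, exists M : R, forall z, Sset z -> `|ipW w z| <= M.
  move=> w.
  have [q [[u [hu <-]] ho]] := proj_exists HiW HW.2 range_sub HR w.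
  exists (hnorm ipU u) => z [hz [hzr hz1]].
  have e : ipW w z = ipU u (op_app As z).
    have := ho z hzr; rewrite (ipDl HiW) (ipNl HiW) adj_id // => /eqP.
    by rewrite subr_eq0 => /eqP.
  rewrite e; apply: le_trans (CSabs HiU _ _) _.
  rewrite -{2}[hnorm ipU u]mulr1; apply: ler_wpM2l => //; exact: nr_ge0.
have [C hC] := ubp HiW HW.2 wb.
set C0 := `|C| + 1.
have C0p : 0 < C0 by rewrite /C0 ltr_pwDr.
have est : forall z, op_dom As z -> op_range A z ->
    hnorm ipW z <= C0 * hnorm ipU (op_app As z).
  move=> z hz hzr.
  have [n0|nn0] := eqVneq (hnorm ipU (op_app As z)) 0.
    have hk : op_ker As z by split => //; exact: nr_eq0 HiU _ n0.
    have := orth_sub_eq0 HiW hzr (F1a hk) => ->.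
    by rewrite (nr0 HiW); apply: mulr_ge0; [exact: ltW | exact: nr_ge0].
  have np : 0 < hnorm ipU (op_app As z) by rewrite lt_def nn0 nr_ge0.
  set t := (hnorm ipU (op_app As z))^-1.
  have tp : 0 < t by rewrite invr_gt0.
  have hs : Sset (t *: z).
    split; first exact: subZ adj_dom_sub _ _ hz.
    split; first exact: subZ range_sub _ _ hzr.
    rewrite As_Z // (nrZ HiU) (gtr0_norm tp) mulVf //.
  have := hC _ hs; rewrite (nrZ HiW) (gtr0_norm tp) => h.
  rewrite -(ler_pM2l tp); apply: le_trans h _.
  rewrite mulrCA mulVf // mulr1 /C0.
  by apply: le_trans (ler_norm C) _; rewrite lerDl.
move=> u l hu hl.
have hpre : forall n, exists v, op_dom (red As A) v /\ op_app As v = u n.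
  by move=> n; apply: pre_adj.
case: (choice hpre) => v hv.
have hcv : cauchy_seq ipW v.
  move=> eps he.
  have [N hN] := conv_cauchy HiU hl (divr_gt0 he C0p).
  exists N => m n hm hn.
  have hd : op_dom As (v m - v n) := subB adj_dom_sub (hv m).1.1 (hv n).1.1.
  have hr : op_range A (v m - v n) := subB range_sub (hv m).1.2 (hv n).1.2.
  apply: le_lt_trans (est _ hd hr) _.
  rewrite As_B ?(hv m).2 ?(hv n).2; [|exact: (hv m).1.1|exact: (hv n).1.1].
  by rewrite -ltr_pdivlMl // mulrC; apply: hN.
case: (HW.2 _ hcv) => v0 hv0.
have hd : forall n, op_dom As (v n) by move=> n; exact: (hv n).1.1.
have hl' : converges ipU (fun n => op_app As (v n)) l.
  by move=> eps he; have [N hN] := hl eps he; exists N => n hn; rewrite (hv n).2; apply: hN.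
have [h1 h2] := adj_closed hd hv0 hl'.
by exists v0.
Qed.

Lemma crt_const (Hpre : forall w, op_range A w -> exists u, op_dom (red A As) u /\ op_app A u = w)
  c (hc : best_const ipU ipW A As c) w :
  op_dom (red As A) w -> hnorm ipW w <= c * hnorm ipU (op_app As w).
Proof.
move=> [hw hwr].
have [u [[hu hur] hAu]] := Hpre w hwr.
have [c0 [hcu _]] := hc.
have h1 : hnorm ipU u <= c * hnorm ipW w by rewrite -hAu; apply: hcu.
have e : hnorm ipW w ^+ 2 = ipU u (op_app As w).
  by rewrite (nr_sq HiW) -{1}hAu adj_id.
have h2 := CS HiU u (op_app As w).
have g1 := nr_ge0 ipW w; have g2 := nr_ge0 ipU u; have g3 := nr_ge0 ipU (op_app As w).
move: e h1 h2 g1 g2 g3.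
set a := hnorm ipW w; set b := hnorm ipU u; set d := hnorm ipU (op_app As w).
set q := ipU u _ => e h1 h2 g1 g2 g3.
have c0' := ltW c0.
have h3 : a ^+ 2 <= c * a * d.
  rewrite e; apply: le_trans h2 _; exact: ler_wpM2r.
have g4 : 0 <= c * d by apply: mulr_ge0.
nra.
Qed.

End Op.


Definition hpair (R : realType) (U W : lmodType R) (ipU : U -> U -> R) (ipW : W -> W -> R)
  (A : op U W) (As : op W U) :=
  is_hilbert ipU /\ is_hilbert ipW /\ dd_closed ipU ipW A /\ is_adjoint ipU ipW A As.

Definition pj (R : realType) (V : lmodType R) (ip : V -> V -> R) (S : V -> Prop) (P : V -> V) :=
  is_inner ip /\ subspace S /\ is_orth_proj ip S P.

Section W.
Variables (R : realType) (U W : lmodType R) (ipU : U -> U -> R) (ipW : W -> W -> R).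
Variables (A : op U W) (As : op W U).
Hypothesis H : hpair ipU ipW A As.

Lemma wAdom : subspace (op_dom A). Proof. by case: H => HU [HW [HA HAs]]; exact: (Adom_sub HA). Qed.
Lemma wAsdom : subspace (op_dom As).
Proof. by case: H => HU [HW [HA HAs]]; exact: (adj_dom_sub HU HW HAs). Qed.
Lemma wA_D x y : op_dom A x -> op_dom A y -> op_app A (x + y) = op_app A x + op_app A y.
Proof. by case: H => HU [HW [HA HAs]]; exact: (A_D HA). Qed.
Lemma wA_B x y : op_dom A x -> op_dom A y -> op_app A (x - y) = op_app A x - op_app A y.
Proof. by case: H => HU [HW [HA HAs]]; exact: (A_B HA). Qed.
Lemma wA_0 : op_app A 0 = 0.
Proof. by case: H => HU [HW [HA HAs]]; exact: (A_0 HA). Qed.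
Lemma wAs_D x y : op_dom As x -> op_dom As y -> op_app As (x + y) = op_app As x + op_app As y.
Proof. by case: H => HU [HW [HA HAs]]; exact: (As_D HU HW HA HAs). Qed.
Lemma wAs_B x y : op_dom As x -> op_dom As y -> op_app As (x - y) = op_app As x - op_app As y.
Proof. by case: H => HU [HW [HA HAs]]; exact: (As_B HU HW HA HAs). Qed.
Lemma wAs_0 : op_app As 0 = 0.
Proof. by case: H => HU [HW [HA HAs]]; exact: (As_0 HU HW HA HAs). Qed.
Lemma wadj x y : op_dom A x -> op_dom As y -> ipW (op_app A x) y = ipU x (op_app As y).
Proof. by case: H => HU [HW [HA HAs]]; exact: (adj_id HAs). Qed.
Lemma wF1a y : op_ker As y -> orth ipW (op_range A) y.
Proof. by case: H => HU [HW [HA HAs]]; exact: (F1a HU HW HAs). Qed.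
Lemma wF1b y : orth ipW (op_range A) y -> op_ker As y.
Proof. by case: H => HU [HW [HA HAs]]; exact: (F1b HU HW HA HAs). Qed.
Lemma wF2 x : orth ipU (op_range As) x -> op_ker A x.
Proof. by case: H => HU [HW [HA HAs]]; exact: (F2 HU HW HA HAs). Qed.
Lemma wkerA x : op_ker A x -> orth ipU (op_range As) x.
Proof. by case: H => HU [HW [HA HAs]]; exact: (kerA_orth HW HAs). Qed.
Lemma wR : subspace (op_range A).
Proof. by case: H => HU [HW [HA HAs]]; exact: (range_sub HA). Qed.
Lemma wRs : subspace (op_range As).
Proof. by case: H => HU [HW [HA HAs]]; exact: (range_subs HU HW HA HAs). Qed.
Lemma wker : subspace (op_ker A).
Proof.
split; first by split; [exact: sub0 wAdom | exact: wA_0].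
move=> a x y [hx hx0] [hy hy0]; split; first exact: subZD wAdom _ _ _ hx hy.
by case: H => _ [_ [HA _]]; rewrite (A_ZD HA) // hx0 hy0 scaler0 addr0.
Qed.
Lemma wkers : subspace (op_ker As).
Proof.
split; first by split; [exact: sub0 wAsdom | exact: wAs_0].
move=> a x y [hx hx0] [hy hy0]; split; first exact: subZD wAsdom _ _ _ hx hy.
by case: H => HU [HW [HA HAs]]; rewrite (adj_ZD HU HW HA HAs) // hx0 hy0 scaler0 addr0.
Qed.
Lemma wpre (HR : closed_set ipW (op_range A)) w :
  op_range A w -> exists u, op_dom (red A As) u /\ op_app A u = w.
Proof.
case: H => HU [HW [HA HAs]].
exact: (pre_from_closed HU HW HA HAs (crt_closed HU HW HA HAs HR)).
Qed.
Lemma wpres (HR : closed_set ipW (op_range A)) w :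
  op_range As w -> exists v, op_dom (red As A) v /\ op_app As v = w.
Proof. by case: H => HU [HW [HA HAs]]; exact: (pre_adj HU HW HA HAs HR). Qed.
Lemma wcs (HR : closed_set ipW (op_range A)) c (hc : best_const ipU ipW A As c) w :
  op_dom (red As A) w -> hnorm ipW w <= c * hnorm ipU (op_app As w).
Proof.
move=> hw; case: H => HU [HW [HA HAs]]; apply: (crt_const HU HW HAs _ hc) => //.
by move=> v hv; apply: wpre.
Qed.

Lemma wPR_ker P (HP : is_orth_proj ipW (op_range A) P) v : op_ker As (v - P v).
Proof. by apply: wF1b; apply: projO. Qed.
Lemma wPR_dom P (HP : is_orth_proj ipW (op_range A) P) v :
  op_dom As v -> op_dom As (P v) /\ op_app As (P v) = op_app As v.
Proof.
move=> hv; have [hk hk0] := wPR_ker HP v.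
have e : P v = v - (v - P v) by rewrite opprB addrC subrK.
have hd : op_dom As (P v) by rewrite e; exact: subB wAsdom _ _ hv hk.
by split => //; rewrite {1}e wAs_B // hk0 subr0.
Qed.
Lemma wPRs_ker P (HP : is_orth_proj ipU (op_range As) P) v : op_ker A (v - P v).
Proof. by apply: wF2; apply: projO. Qed.
Lemma wPRs_dom P (HP : is_orth_proj ipU (op_range As) P) v :
  op_dom A v -> op_dom A (P v) /\ op_app A (P v) = op_app A v.
Proof.
move=> hv; have [hk hk0] := wPRs_ker HP v.
have e : P v = v - (v - P v) by rewrite opprB addrC subrK.
have hd : op_dom A (P v) by rewrite e; exact: subB wAdom _ _ hv hk.
by split => //; rewrite {1}e wA_B // hk0 subr0.
Qed.
End W.

Lemma subI (R : realType) (V : lmodType R) (S T : V -> Prop) :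
  subspace S -> subspace T -> subspace (fun z => S z /\ T z).
Proof.
move=> hS hT; split; first by split; apply: sub0.
by move=> a x y [h1 h2] [h3 h4]; split; apply: subZD.
Qed.

Section PJ.
Variables (R : realType) (V : lmodType R) (ip : V -> V -> R) (S : V -> Prop) (P : V -> V).
Hypothesis H : pj ip S P.
Lemma pS v : S (P v). Proof. by case: H => Hi [HS HP]; exact: (projS HP). Qed.
Lemma pO v : orth ip S (v - P v). Proof. by case: H => Hi [HS HP]; exact: (projO HP). Qed.
Lemma pid v : S v -> P v = v. Proof. by case: H => Hi [HS HP]; exact: (proj_id Hi HS HP). Qed.
Lemma porth v : orth ip S v -> P v = 0. Proof. by case: H => Hi [HS HP]; exact: (proj_orth Hi HS HP). Qed.
Lemma pB u v : P (u - v) = P u - P v. Proof. by case: H => Hi [HS HP]; exact: (projB Hi HS HP). Qed.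
Lemma pD u v : P (u + v) = P u + P v. Proof. by case: H => Hi [HS HP]; exact: (projD Hi HS HP). Qed.
Lemma pN u : P (- u) = - P u. Proof. by case: H => Hi [HS HP]; exact: (projN Hi HS HP). Qed.
Lemma pip v s : S s -> ip v s = ip (P v) s. Proof. by case: H => Hi [HS HP]; exact: (proj_ip Hi HP). Qed.
Lemma pcontr v : hnorm ip (P v) <= hnorm ip v. Proof. by case: H => Hi [HS HP]; exact: (proj_contr Hi HP). Qed.
End PJ.

Section Misc.
Variables (R : realType) (V : lmodType R) (ip : V -> V -> R).
Hypothesis Hip : is_inner ip.
Local Notation nr := (hnorm ip).

Lemma sqle (a b : R) : 0 <= a -> a <= b -> a ^+ 2 <= b ^+ 2.
Proof. nra. Qed.

Lemma G_form a w : 2 * ip a w - ip w w = nr a ^+ 2 - nr (a - w) ^+ 2.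
Proof. rewrite !(nr_sq Hip) !(ipDl Hip, ipDr Hip, ipNl Hip, ipNr Hip) (ipC Hip w a); ring. Qed.

Lemma attmax (T : Type) (D : T -> Prop) (G : T -> R) (wf : T -> V) a phi0 :
  D phi0 -> wf phi0 = a -> (forall phi, D phi -> G phi = nr a ^+ 2 - nr (a - wf phi) ^+ 2) ->
  attains_max D G (nr a ^+ 2) phi0.
Proof.
move=> h0 hw hG; split => //; split.
  by rewrite hG // hw subrr (nr0 Hip) expr0n /= subr0.
move=> phi hphi; rewrite hG // lerBlDr lerDl; exact: exprn_ge0 (nr_ge0 _ _).
Qed.

Lemma hodge (S1 K S2 : V -> Prop) P1 PK P2 :
  pj ip S1 P1 -> pj ip K PK -> pj ip S2 P2 ->
  (forall a k, S1 a -> K k -> ip a k = 0) ->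
  (forall a b, S1 a -> S2 b -> ip a b = 0) ->
  (forall k b, K k -> S2 b -> ip k b = 0) ->
  (forall w, orth ip S1 w -> orth ip S2 w -> K w) ->
  forall v, v = P1 v + PK v + P2 v /\
    nr v ^+ 2 = nr (P1 v) ^+ 2 + nr (PK v) ^+ 2 + nr (P2 v) ^+ 2.
Proof.
move=> h1 hK h2 o1K o12 oK2 hk v.
set w := v - (P1 v + P2 v).
have hw : K w.
  apply: hk => s hs.
    rewrite /w (ipDl Hip) (ipNl Hip) (ipDl Hip) (pip h1 v hs) (ipC Hip (P2 v)).
    by rewrite (o12 _ _ hs (pS h2 v)) addr0 subrr.
  rewrite /w (ipDl Hip) (ipNl Hip) (ipDl Hip) (pip h2 v hs) (o12 _ _ (pS h1 v) hs).
  by rewrite add0r subrr.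
have e : PK v = w.
  case: hK => _ [HS HP]; apply: (proj_char Hip HS HP) => //.
  have -> : v - w = P1 v + P2 v by rewrite /w opprB addrC subrK.
  move=> kk hkk; rewrite (ipDl Hip) (o1K _ _ (pS h1 v) hkk) add0r.
  by rewrite (ipC Hip) (oK2 _ _ hkk (pS h2 v)).
have ev : v = P1 v + PK v + P2 v.
  by rewrite e -addrA (addrC w (P2 v)) addrA (addrC (P1 v + P2 v)) subrK.
split => //.
rewrite {1}ev (pyth Hip) ?(pyth Hip) //.
  exact: o1K (pS h1 v) (pS hK v).
rewrite (ipDl Hip) (o12 _ _ (pS h1 v) (pS h2 v)) (oK2 _ _ (pS hK v) (pS h2 v)).
by rewrite addr0.
Qed.
End Misc.

Unset Implicit Arguments.

Theorem theorem4p7 (R : realType)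
  (H0 H1 H2 H3 H4 : lmodType R)
  (ip0 : H0 -> H0 -> R) (ip1 : H1 -> H1 -> R) (ip2 : H2 -> H2 -> R)
  (ip3 : H3 -> H3 -> R) (ip4 : H4 -> H4 -> R)
  (hH0 : is_hilbert ip0) (hH1 : is_hilbert ip1) (hH2 : is_hilbert ip2)
  (hH3 : is_hilbert ip3) (hH4 : is_hilbert ip4)
  (A0 : op H0 H1) (A1 : op H1 H2) (A2 : op H2 H3) (A3 : op H3 H4)
  (A0s : op H1 H0) (A1s : op H2 H1) (A2s : op H3 H2) (A3s : op H4 H3)
  (hA0 : dd_closed ip0 ip1 A0) (hA1 : dd_closed ip1 ip2 A1)
  (hA2 : dd_closed ip2 ip3 A2) (hA3 : dd_closed ip3 ip4 A3)
  (hA0s : is_adjoint ip0 ip1 A0 A0s) (hA1s : is_adjoint ip1 ip2 A1 A1s)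
  (hA2s : is_adjoint ip2 ip3 A2 A2s) (hA3s : is_adjoint ip3 ip4 A3 A3s)
  (hc0 : forall z, op_range A0 z -> op_ker A1 z)
  (hc1 : forall z, op_range A1 z -> op_ker A2 z)
  (hc2 : forall z, op_range A2 z -> op_ker A3 z)
  (hR1 : closed_set ip2 (op_range A1)) (hR2 : closed_set ip3 (op_range A2))
  (hR3 : closed_set ip4 (op_range A3))
  (hK2 : fin_dim (harm A2 A1s))
  (c1 c2 c3 : R)
  (hc1b : best_const ip1 ip2 A1 A1s c1) (hc2b : best_const ip2 ip3 A2 A2s c2)
  (hc3b : best_const ip3 ip4 A3 A3s c3)
  (PA1 PA2s P2 : H2 -> H2) (PA2 PA3s P3 : H3 -> H3)
  (hPA1 : is_orth_proj ip2 (op_range A1) PA1)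
  (hPA2s : is_orth_proj ip2 (op_range A2s) PA2s)
  (hP2 : is_orth_proj ip2 (harm A2 A1s) P2)
  (hPA2 : is_orth_proj ip3 (op_range A2) PA2)
  (hPA3s : is_orth_proj ip3 (op_range A3s) PA3s)
  (hP3 : is_orth_proj ip3 (harm A3 A2s) P3)
  (f : H2) (g : H1) (k : H2)
  (hf : op_range A2s f) (hg : op_range A1s g) (hk : harm A2 A1s k)
  (x : H2)
  (hxD : op_dom A2 x /\ op_dom A1s x /\ op_dom A2s (op_app A2 x))
  (hxf : op_app A2s (op_app A2 x) = f) (hxg : op_app A1s x = g) (hxk : P2 x = k)
  (xt : H2) (yt : H3) :
  let nrm1 := hnorm ip1 in let nrm2 := hnorm ip2 in
  let nrm3 := hnorm ip3 in let nrm4 := hnorm ip4 in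
  let K2 := harm A2 A1s in let K3 := harm A3 A2s in
  let A2sA2 := comp_op A2s A2 in
  let y := op_app A2 x in
  let e := x - xt in let h := y - yt in
  let eA1 := PA1 e in let eA2s := PA2s e in let eK2 := P2 e in
  let hA2 := PA2 h in let hA3s := PA3s h in let hK3 := P3 h in
  (* (i) *)
  (e = eA1 + eK2 + eA2s /\ op_range A1 eA1 /\ K2 eK2 /\ op_range A2s eA2s /\
   nrm2 e ^+ 2 = nrm2 eA1 ^+ 2 + nrm2 eK2 ^+ 2 + nrm2 eA2s ^+ 2 /\
   h = hA2 + hK3 + hA3s /\ op_range A2 hA2 /\ K3 hK3 /\ op_range A3s hA3s /\
   nrm3 h ^+ 2 = nrm3 hA2 ^+ 2 + nrm3 hK3 ^+ 2 + nrm3 hA3s ^+ 2) /\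
  (* (ii) and (iii), with z = xt, or z = the K2-orthogonal part of xt
     when xt = k + z with z in K2^perp *)
  (forall z : H2, z = xt \/ (xt = k + z /\ orth ip2 K2 z) ->
   (* (ii) *)
   ((exists xg, op_dom (red A1s A1) xg /\ op_app A1s xg = g /\ eA1 = xg - PA1 z) /\
    op_app A1s (eA1 + z) = g /\
    attains_min (op_dom A1s)
      (fun zeta => (c1 * nrm1 (op_app A1s zeta - g) + nrm2 (zeta - z)) ^+ 2)
      (nrm2 eA1 ^+ 2) (eA1 + z) /\
    (exists phi, op_dom (red A1 A1s) phi /\ op_app A1 phi = eA1 /\
      attains_max (op_dom A1)
        (fun phi => 2 * ip1 g phi - ip2 (2 *: z + op_app A1 phi) (op_app A1 phi))
        (nrm2 eA1 ^+ 2) phi)) /\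
   (* (iii) *)
   (eA2s = PA2s x - PA2s z /\
    op_dom A2sA2 (eA2s + z) /\ op_app A2 (eA2s + z) = y /\
    op_app A2sA2 (eA2s + z) = f /\ op_app A2s y = f /\
    attains_min (fun p : H2 * H3 => op_dom A2 p.1 /\ op_dom A2s p.2)
      (fun p => (c2 ^+ 2 * nrm2 (op_app A2s p.2 - f) + c2 * nrm3 (p.2 - op_app A2 p.1)
                 + nrm2 (p.1 - z)) ^+ 2)
      (nrm2 eA2s ^+ 2) (eA2s + z, y) /\
    attains_min (op_dom A2sA2)
      (fun xi => (c2 ^+ 2 * nrm2 (op_app A2sA2 xi - f) + nrm2 (xi - z)) ^+ 2)
      (nrm2 eA2s ^+ 2) (eA2s + z) /\
    (exists psi phi, op_dom (red A2s A2) psi /\ op_app A2s psi = eA2s /\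
      op_dom (red A2 A2s) phi /\ op_app A2 phi = psi /\
      attains_max (op_dom A2sA2)
        (fun phi => 2 * ip2 f phi - ip2 (2 *: z + op_app A2sA2 phi) (op_app A2sA2 phi))
        (nrm2 eA2s ^+ 2) phi))) /\
  (* (iv) *)
  (eK2 = k - P2 xt /\
   (exists phi psi, op_dom (red A1 A1s) phi /\ op_app A1 phi = PA1 xt /\
     op_dom (red A2s A2) psi /\ op_app A2s psi = PA2s xt /\
     op_app A1 phi + op_app A2s psi = xt - P2 xt /\
     attains_min (fun p : H1 * H3 => op_dom A1 p.1 /\ op_dom A2s p.2)
       (fun p => nrm2 (k - xt + op_app A1 p.1 + op_app A2s p.2) ^+ 2)
       (nrm2 eK2 ^+ 2) (phi, psi)) /\
   attains_max K2 (fun theta => ip2 (2 *: (k - xt) - theta) theta) (nrm2 eK2 ^+ 2) eK2) /\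
  (* (v) *)
  (hA2 = y - PA2 yt /\ op_app A2s (hA2 + yt) = f /\
   attains_min (op_dom A2s)
     (fun zeta => (c2 * nrm2 (op_app A2s zeta - f) + nrm3 (zeta - yt)) ^+ 2)
     (nrm3 hA2 ^+ 2) (hA2 + yt) /\
   (exists phi, op_dom (red A2 A2s) phi /\ op_app A2 phi = hA2 /\
     attains_max (op_dom A2)
       (fun phi => 2 * ip2 f phi - ip3 (2 *: yt + op_app A2 phi) (op_app A2 phi))
       (nrm3 hA2 ^+ 2) phi)) /\
  (* (vi) *)
  (hA3s = - PA3s yt /\ op_ker A3 (hA3s + yt) /\
   attains_min (op_dom A3)
     (fun xi => (c3 * nrm4 (op_app A3 xi) + nrm3 (xi - yt)) ^+ 2)
     (nrm3 hA3s ^+ 2) (hA3s + yt) /\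
   attains_min (op_ker A3) (fun xi => nrm3 (xi - yt) ^+ 2) (nrm3 hA3s ^+ 2) (hA3s + yt) /\
   (exists phi, op_dom (red A3s A3) phi /\ op_app A3s phi = hA3s /\
     attains_max (op_dom A3s)
       (fun phi => - ip3 (2 *: yt + op_app A3s phi) (op_app A3s phi))
       (nrm3 hA3s ^+ 2) phi)) /\
  (* (vii) *)
  (hK3 = - P3 yt /\
   (exists phi psi, op_dom (red A2 A2s) phi /\ op_app A2 phi = PA2 yt /\
     op_dom (red A3s A3) psi /\ op_app A3s psi = PA3s yt /\
     op_app A2 phi + op_app A3s psi = yt - P3 yt /\
     attains_min (fun p : H2 * H4 => op_dom A2 p.1 /\ op_dom A3s p.2)
       (fun p => nrm3 (- yt + op_app A2 p.1 + op_app A3s p.2) ^+ 2)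
       (nrm3 hK3 ^+ 2) (phi, psi)) /\
   attains_max K3 (fun theta => - ip3 (2 *: yt + theta) theta) (nrm3 hK3 ^+ 2) hK3) /\
  (* final remarks *)
  (forall xp : H2, xt = k + xp -> orth ip2 K2 xp -> eK2 = 0) /\
  (orth ip3 K3 yt -> hK3 = 0).

Proof.
move=> nrm1 nrm2 nrm3 nrm4 K2 K3 A2sA2 y e h eA1 eA2s eK2 hA2v hA3sv hK3v.
rewrite /nrm1 /nrm2 /nrm3 /nrm4 /K2 /K3 /A2sA2.
have i1 := hH1.1; have i2 := hH2.1; have i3 := hH3.1; have i4 := hH4.1.
have HP1 : hpair ip1 ip2 A1 A1s := conj hH1 (conj hH2 (conj hA1 hA1s)).
have HP2 : hpair ip2 ip3 A2 A2s := conj hH2 (conj hH3 (conj hA2 hA2s)).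
have HP3 : hpair ip3 ip4 A3 A3s := conj hH3 (conj hH4 (conj hA3 hA3s)).
have sR1 := wR HP1; have sR2s := wRs HP2; have sR2 := wR HP2; have sR3s := wRs HP3.
have sK2 : subspace (harm A2 A1s) := subI (wker HP2) (wkers HP1).
have sK3 : subspace (harm A3 A2s) := subI (wker HP3) (wkers HP2).
have jA1 : pj ip2 (op_range A1) PA1 := conj i2 (conj sR1 hPA1).
have jA2s : pj ip2 (op_range A2s) PA2s := conj i2 (conj sR2s hPA2s).
have jP2 : pj ip2 (harm A2 A1s) P2 := conj i2 (conj sK2 hP2).
have jA2 : pj ip3 (op_range A2) PA2 := conj i3 (conj sR2 hPA2).
have jA3s : pj ip3 (op_range A3s) PA3s := conj i3 (conj sR3s hPA3s).
have jP3 : pj ip3 (harm A3 A2s) P3 := conj i3 (conj sK3 hP3).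
have o12 : forall a b, op_range A1 a -> op_range A2s b -> ip2 a b = 0.
  move=> a b ha [w [hw <-]]; have [hd h0] := hc1 a ha.
  by rewrite -(wadj HP2 hd hw) h0 (ip0l i3).
have o1K : forall a kk, op_range A1 a -> harm A2 A1s kk -> ip2 a kk = 0.
  move=> a kk ha [_ hk1]; rewrite (ipC i2); exact: (wF1a HP1 hk1 ha).
have oK2 : forall kk b, harm A2 A1s kk -> op_range A2s b -> ip2 kk b = 0.
  move=> kk b [hk2 _] hb; exact: (wkerA HP2 hk2 hb).
have hKo2 : forall w, orth ip2 (op_range A1) w -> orth ip2 (op_range A2s) w -> harm A2 A1s w.
  move=> w h1 h2; split; [exact: (wF2 HP2 h2) | exact: (wF1b HP1 h1)].
have hodge2 := hodge i2 jA1 jP2 jA2s o1K o12 oK2 hKo2.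
have o23 : forall a b, op_range A2 a -> op_range A3s b -> ip3 a b = 0.
  move=> a b ha [w [hw <-]]; have [hd h0] := hc2 a ha.
  by rewrite -(wadj HP3 hd hw) h0 (ip0l i4).
have o2K : forall a kk, op_range A2 a -> harm A3 A2s kk -> ip3 a kk = 0.
  move=> a kk ha [_ hk1]; rewrite (ipC i3); exact: (wF1a HP2 hk1 ha).
have oK3 : forall kk b, harm A3 A2s kk -> op_range A3s b -> ip3 kk b = 0.
  move=> kk b [hk2 _] hb; exact: (wkerA HP3 hk2 hb).
have hKo3 : forall w, orth ip3 (op_range A2) w -> orth ip3 (op_range A3s) w -> harm A3 A2s w.
  move=> w h1 h2; split; [exact: (wF2 HP3 h2) | exact: (wF1b HP2 h1)].
have hodge3 := hodge i3 jA2 jP3 jA3s o2K o23 oK3 hKo3.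
have pre1 := wpre HP1 hR1; have pre2 := wpre HP2 hR2.
have pre2s := wpres HP2 hR2; have pre3s := wpres HP3 hR3.
have c1s := wcs HP1 hR1 hc1b; have c2s := wcs HP2 hR2 hc2b.
have c2e := hc2b.2.1; have c3e := hc3b.2.1.
have c1p := hc1b.1; have c2p := hc2b.1; have c3p := hc3b.1.
have [hx2 [hx1s hy2s]] := hxD.
have yR : op_range A2 y by exists x.
have yK3 : op_ker A3 y := hc2 y yR.
split.
{ have [d1 d2] := hodge2 e; have [d3 d4] := hodge3 h.
  split; first exact: d1. split; first exact: pS jA1 e.
  split; first exact: pS jP2 e. split; first exact: pS jA2s e.
  split; first exact: d2. split; first exact: d3.
  split; first exact: pS jA2 h. split; first exact: pS jP3 h.
  split; first exact: pS jA3s h. exact: d4. }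
split.
{ move=> z hz.
  have hkA1 : PA1 k = 0 := porth jA1 (wF1a HP1 hk.2).
  have hkA2s : PA2s k = 0 := porth jA2s (wkerA HP2 hk.1).
  have eA1z : eA1 = PA1 (x - z).
    rewrite /eA1 /e; case: hz => [-> // | [-> _]].
    by rewrite opprD addrA !(pB jA1) hkA1 subr0.
  have eA2sz : eA2s = PA2s (x - z).
    rewrite /eA2s /e; case: hz => [-> // | [-> _]].
    by rewrite opprD addrA !(pB jA2s) hkA2s subr0.
  have [Fx1a Fx1b] := wPR_dom HP1 hPA1 hx1s.
  split.
  { split.
      exists (PA1 x); split; first by split; [exact: Fx1a | exact: pS jA1 x].
      split; first by rewrite Fx1b hxg.
      by rewrite eA1z (pB jA1).
    have hA1z : op_dom A1s (eA1 + z) /\ op_app A1s (eA1 + z) = g.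
      have [hkz hkz0] := wPR_ker HP1 hPA1 z.
      have E : eA1 + z = PA1 x + (z - PA1 z) by rewrite eA1z (pB jA1) addrA addrAC.
      rewrite E; split; first exact (subD (wAsdom HP1) Fx1a hkz).
      by rewrite (wAs_D HP1 Fx1a hkz) Fx1b hxg hkz0 addr0.
    split; first exact: hA1z.2.
    split.
      split; first exact: hA1z.1.
      split; first by rewrite hA1z.2 subrr (nr0 i1) mulr0 add0r addrK.
      move=> zeta hzeta.
      apply: sqle; first exact: nr_ge0.
      have [hPz hPz'] := wPR_dom HP1 hPA1 hzeta.
      have t := nr_tri3 i2 (PA1 x) (PA1 zeta) (PA1 z).
      rewrite eA1z (pB jA1).
      have r1 : op_dom (red A1s A1) (PA1 x - PA1 zeta) :=
        conj (subB (wAsdom HP1) Fx1a hPz) (subB sR1 (pS jA1 x) (pS jA1 zeta)).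
      have t1 := c1s _ r1.
      rewrite (wAs_B HP1 Fx1a hPz) Fx1b hPz' hxg (nrB i1) in t1.
      have t2 : hnorm ip2 (PA1 zeta - PA1 z) <= hnorm ip2 (zeta - z).
        by rewrite -(pB jA1); exact: pcontr jA1 _.
      move: t t1 t2.
      set a := hnorm ip2 (PA1 x - PA1 z); set b := hnorm ip2 (PA1 x - PA1 zeta).
      set c := hnorm ip2 (PA1 zeta - PA1 z); set d := hnorm ip1 (op_app A1s zeta - g).
      set w := hnorm ip2 (zeta - z).
      move=> t t1 t2; lra.
    have [phi [hphi hAphi]] := pre1 _ (pS jA1 e).
    exists phi; split; first exact: hphi. split; first exact: hAphi.
    apply: (attmax i2 (wf := op_app A1)) => //; first exact: hphi.1.
    move=> ph hph; rewrite -(G_form i2).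
    have hw : op_range A1 (op_app A1 ph) by exists ph.
    rewrite eA1z -(pip jA1 _ hw) -hxg (ipC i1) -(wadj HP1 hph hx1s) (ipC i2 _ x).
    rewrite !(ipDl i2) (ipZl i2) (ipNl i2); ring. }
  have [hk' hk0'] := wPRs_ker HP2 hPA2s (x - z).
  have E3 : eA2s + z = x - ((x - z) - PA2s (x - z)).
    by rewrite eA2sz opprB opprB addrCA (addrC x) subrK.
  have hdom : op_dom A2 (eA2s + z) by rewrite E3; exact (subB (wAdom HP2) hx2 hk').
  have hA2e : op_app A2 (eA2s + z) = y by rewrite E3 (wA_B HP2 hx2 hk') hk0' subr0.
  have ineq3 : forall xi zeta, op_dom A2 xi -> op_dom A2s zeta ->
      hnorm ip2 eA2s <= c2 ^+ 2 * hnorm ip2 (op_app A2s zeta - f)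
         + c2 * hnorm ip3 (zeta - op_app A2 xi) + hnorm ip2 (xi - z).
    move=> xi zeta hxi hzeta.
    have hxxi : op_dom A2 (x - xi) := subB (wAdom HP2) hx2 hxi.
    have [hp1 hp2] := wPRs_dom HP2 hPA2s hxxi.
    have t1 := c2e _ (conj hp1 (pS jA2s (x - xi))).
    rewrite hp2 (wA_B HP2 hx2 hxi) -/y in t1.
    have [hq1 hq2] := wPR_dom HP2 hPA2 hzeta.
    have r2 : op_dom (red A2s A2) (y - PA2 zeta) :=
      conj (subB (wAsdom HP2) hy2s hq1) (subB sR2 yR (pS jA2 zeta)).
    have t2 := c2s _ r2.
    rewrite (wAs_B HP2 hy2s hq1) hxf hq2 (nrB i2) in t2.
    have t3 := nr_tri3 i3 y (PA2 zeta) (op_app A2 xi).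
    have t4 : hnorm ip3 (PA2 zeta - op_app A2 xi) <= hnorm ip3 (zeta - op_app A2 xi).
      have hAxi : op_range A2 (op_app A2 xi) by exists xi.
      rewrite -{1}(pid jA2 hAxi) -(pB jA2); exact: pcontr jA2 _.
    have t5 := nr_tri3 i2 (PA2s x) (PA2s xi) (PA2s z).
    rewrite -(pB jA2s x xi) in t5.
    have t6 : hnorm ip2 (PA2s xi - PA2s z) <= hnorm ip2 (xi - z).
      by rewrite -(pB jA2s); exact: pcontr jA2s _.
    rewrite eA2sz (pB jA2s).
    have c2n := ltW c2p.
    move: t1 t2 t3 t4 t5 t6.
    set a := hnorm ip2 (PA2s x - PA2s z); set b := hnorm ip2 (PA2s (x - xi)).
    set Y := hnorm ip3 (y - op_app A2 xi); set N := hnorm ip2 (op_app A2s zeta - f).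
    set M1 := hnorm ip3 (y - PA2 zeta); set M2 := hnorm ip3 (PA2 zeta - op_app A2 xi).
    set M := hnorm ip3 (zeta - op_app A2 xi); set c6 := hnorm ip2 (PA2s xi - PA2s z).
    set Wd := hnorm ip2 (xi - z).
    move=> t1 t2 t3 t4 t5 t6.
    have : c2 * Y <= c2 * (c2 * N + M) by apply: ler_wpM2l => //; lra.
    nra.
  split; first by rewrite eA2sz (pB jA2s).
  split; first by split => //=; rewrite hA2e.
  split; first exact: hA2e.
  split; first by rewrite /= hA2e hxf.
  split; first exact: hxf.
  split.
    split; first by split => /=; [exact: hdom | exact: hy2s].
    split.
      by rewrite /= hxf subrr (nr0 i2) mulr0 add0r hA2e subrr (nr0 i3) mulr0 add0r addrK.
    move=> [xi zeta] [/= hxi hzeta].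
    apply: sqle; first exact: nr_ge0.
    exact: ineq3.
  split.
    split; first by split => //=; rewrite hA2e.
    split; first by rewrite /= hA2e hxf subrr (nr0 i2) mulr0 add0r addrK.
    move=> xi [hxi hAxi] /=.
    apply: sqle; first exact: nr_ge0.
    by have := ineq3 xi (op_app A2 xi) hxi hAxi; rewrite subrr (nr0 i3) mulr0 addr0.
  have [psi [hpsi hApsi]] := pre2s _ (pS jA2s e).
  have [phi [hphi hAphi]] := pre2 _ hpsi.2.
  exists psi, phi.
  split; first exact: hpsi. split; first exact: hApsi.
  split; first exact: hphi. split; first exact: hAphi.
  apply: (attmax i2 (wf := fun ph => op_app A2s (op_app A2 ph))).
      by split => /=; [exact: hphi.1 | rewrite hAphi; exact: hpsi.1].
    by rewrite /= hAphi hApsi.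
  move=> ph [hph1 hph2] /=; rewrite -(G_form i2).
  have hw : op_range A2s (op_app A2s (op_app A2 ph)) by exists (op_app A2 ph).
  rewrite eA2sz -(pip jA2s _ hw) -hxf (ipC i2 _ ph) -(wadj HP2 hph1 hy2s).
  rewrite !(ipDl i2) (ipZl i2) (ipNl i2) -(wadj HP2 hx2 hph2) -/y (ipC i3 y).
  ring. }
have hP3y : P3 y = 0 := porth jP3 (fun kk hkk => o2K _ _ yR hkk).
split.
{ have eK2e : eK2 = k - P2 xt by rewrite /eK2 /e (pB jP2) hxk.
  split; first exact: eK2e.
  split.
    have [phi [hphi hAphi]] := pre1 _ (pS jA1 xt).
    have [psi [hpsi hApsi]] := pre2s _ (pS jA2s xt).
    exists phi, psi.
    split; first exact: hphi. split; first exact: hAphi.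
    split; first exact: hpsi. split; first exact: hApsi.
    have [dx _] := hodge2 xt.
    have hsum : op_app A1 phi + op_app A2s psi = xt - P2 xt.
      rewrite hAphi hApsi; apply/eqP; rewrite eq_sym subr_eq; apply/eqP.
      by rewrite {1}dx addrAC.
    split; first exact: hsum.
    split; first by split; [exact: hphi.1 | exact: hpsi.1].
    split.
      by rewrite /= -addrA hsum addrA subrK eK2e.
    move=> [p1 p2] [/= hp1 hp2].
    apply: sqle; first exact: nr_ge0.
    have o1 : orth ip2 (harm A2 A1s) (op_app A1 p1).
      move=> kk hkk; apply: o1K hkk; by exists p1.
    have o2 : orth ip2 (harm A2 A1s) (op_app A2s p2).
      move=> kk hkk; rewrite (ipC i2); apply: oK2 hkk _; by exists p2.
    have <- : P2 (k - xt + op_app A1 p1 + op_app A2s p2) = eK2.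
      by rewrite !(pD jP2) (pN jP2) (pid jP2 hk) (porth jP2 o1) (porth jP2 o2) !addr0 eK2e.
    exact: pcontr jP2 _.
  apply: (attmax i2 (wf := id)) => //; first exact: pS jP2 e.
  move=> th hth /=; rewrite -(G_form i2).
  rewrite (ipDl i2) (ipNl i2) (ipZl i2) (pip jP2 (k - xt) hth) (pB jP2) (pid jP2 hk) -eK2e.
  by []. }
split.
{ have hA2e : hA2v = y - PA2 yt by rewrite /hA2v /h (pB jA2) (pid jA2 yR).
  have [hky hky0] := wPR_ker HP2 hPA2 yt.
  have E5 : hA2v + yt = y + (yt - PA2 yt) by rewrite hA2e addrA addrAC.
  have hd5 : op_dom A2s (hA2v + yt) by rewrite E5; exact (subD (wAsdom HP2) hy2s hky).
  have hA5 : op_app A2s (hA2v + yt) = f by rewrite E5 (wAs_D HP2 hy2s hky) hxf hky0 addr0.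
  split; first exact: hA2e. split; first exact: hA5.
  split.
    split; first exact: hd5.
    split; first by rewrite hA5 subrr (nr0 i2) mulr0 add0r addrK.
    move=> zeta hzeta; apply: sqle; first exact: nr_ge0.
    have [hq1 hq2] := wPR_dom HP2 hPA2 hzeta.
    have r2 : op_dom (red A2s A2) (y - PA2 zeta) :=
      conj (subB (wAsdom HP2) hy2s hq1) (subB sR2 yR (pS jA2 zeta)).
    have t2 := c2s _ r2.
    rewrite (wAs_B HP2 hy2s hq1) hxf hq2 (nrB i2) in t2.
    have t3 := nr_tri3 i3 y (PA2 zeta) (PA2 yt).
    have t4 : hnorm ip3 (PA2 zeta - PA2 yt) <= hnorm ip3 (zeta - yt).
      by rewrite -(pB jA2); exact: pcontr jA2 _.
    rewrite hA2e.
    move: t2 t3 t4.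
    set a := hnorm ip3 (y - PA2 yt); set b := hnorm ip3 (y - PA2 zeta).
    set c := hnorm ip3 (PA2 zeta - PA2 yt); set d := hnorm ip2 (op_app A2s zeta - f).
    set w := hnorm ip3 (zeta - yt).
    move=> t2 t3 t4; lra.
  have [phi [hphi hAphi]] := pre2 _ (pS jA2 h).
  exists phi; split; first exact: hphi. split; first exact: hAphi.
  apply: (attmax i3 (wf := op_app A2)) => //; first exact: hphi.1.
  move=> ph hph; rewrite -(G_form i3).
  have hw : op_range A2 (op_app A2 ph) by exists ph.
  rewrite /hA2v -(pip jA2 _ hw) /h -hxf (ipC i2) -(wadj HP2 hph hy2s).
  rewrite !(ipDl i3) (ipZl i3) (ipNl i3) (ipC i3 y); ring. }
split.
{ have hPy : PA3s y = 0 := porth jA3s (wkerA HP3 yK3).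
  have hA3e : hA3sv = - PA3s yt by rewrite /hA3sv /h (pB jA3s) hPy sub0r.
  have [hk3 hk30] := wPRs_ker HP3 hPA3s yt.
  have E6 : hA3sv + yt = yt - PA3s yt by rewrite hA3e addrC.
  have ineq6 : forall xi, op_dom A3 xi ->
      hnorm ip3 hA3sv <= c3 * hnorm ip4 (op_app A3 xi) + hnorm ip3 (xi - yt).
    move=> xi hxi.
    have [hp1 hp2] := wPRs_dom HP3 hPA3s hxi.
    have t1 := c3e _ (conj hp1 (pS jA3s xi)); rewrite hp2 in t1.
    have t2 : hnorm ip3 (PA3s yt - PA3s xi) <= hnorm ip3 (xi - yt).
      by rewrite -(pB jA3s) (nrB i3 xi yt); exact: pcontr jA3s _.
    rewrite hA3e (nrN i3).
    have t3 := nr_tri3 i3 (PA3s yt) (PA3s xi) 0; rewrite !subr0 in t3.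
    move: t1 t2 t3.
    set a := hnorm ip3 (PA3s yt); set b := hnorm ip3 (PA3s xi).
    set c := hnorm ip3 (PA3s yt - PA3s xi); set d := hnorm ip4 (op_app A3 xi).
    set w := hnorm ip3 (xi - yt).
    move=> t1 t2 t3; lra.
  split; first exact: hA3e.
  split; first by rewrite E6; split.
  split.
    split; first by rewrite E6.
    split; first by rewrite addrK E6 hk30 (nr0 i4) mulr0 add0r.
    move=> xi hxi; apply: sqle; first exact: nr_ge0.
    exact: ineq6.
  split.
    split; first by rewrite E6; split.
    split; first by rewrite addrK.
    move=> xi [hxi hxi0]; apply: sqle; first exact: nr_ge0.
    by have := ineq6 xi hxi; rewrite hxi0 (nr0 i4) mulr0 add0r.
  have [phi [hphi hAphi]] := pre3s _ (pS jA3s h).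
  exists phi; split; first exact: hphi. split; first exact: hAphi.
  apply: (attmax i3 (wf := op_app A3s)) => //; first exact: hphi.1.
  move=> ph hph; rewrite -(G_form i3).
  have hw : op_range A3s (op_app A3s ph) by exists ph.
  rewrite hA3e (ipNl i3) -(pip jA3s yt hw) (ipDl i3) (ipZl i3); ring. }
split.
{ have hK3e : hK3v = - P3 yt by rewrite /hK3v /h (pB jP3) hP3y sub0r.
  split; first exact: hK3e.
  split.
    have [phi [hphi hAphi]] := pre2 _ (pS jA2 yt).
    have [psi [hpsi hApsi]] := pre3s _ (pS jA3s yt).
    exists phi, psi.
    split; first exact: hphi. split; first exact: hAphi.
    split; first exact: hpsi. split; first exact: hApsi.
    have [dy _] := hodge3 yt.
    have hsum : op_app A2 phi + op_app A3s psi = yt - P3 yt.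
      rewrite hAphi hApsi; apply/eqP; rewrite eq_sym subr_eq; apply/eqP.
      by rewrite {1}dy addrAC.
    split; first exact: hsum.
    split; first by split; [exact: hphi.1 | exact: hpsi.1].
    split.
      by rewrite /= -addrA hsum addrA addNr sub0r hK3e.
    move=> [p1 p2] [/= hp1 hp2].
    apply: sqle; first exact: nr_ge0.
    have o1 : orth ip3 (harm A3 A2s) (op_app A2 p1).
      move=> kk hkk; apply: o2K hkk; by exists p1.
    have o2 : orth ip3 (harm A3 A2s) (op_app A3s p2).
      move=> kk hkk; rewrite (ipC i3); apply: oK3 hkk _; by exists p2.
    have <- : P3 (- yt + op_app A2 p1 + op_app A3s p2) = hK3v.
      by rewrite !(pD jP3) (pN jP3) (porth jP3 o1) (porth jP3 o2) !addr0 hK3e.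
    exact: pcontr jP3 _.
  apply: (attmax i3 (wf := id)) => //; first exact: pS jP3 h.
  move=> th hth /=; rewrite -(G_form i3).
  rewrite hK3e (ipNl i3) -(pip jP3 yt hth) (ipDl i3) (ipZl i3); ring. }
split.
  move=> xp hxp hxpo.
  by rewrite /eK2 /e (pB jP2) hxk hxp (pD jP2) (pid jP2 hk) (porth jP2 hxpo) addr0 subrr.
move=> hyo.
by rewrite /hK3v /h (pB jP3) hP3y (porth jP3 hyo) subr0.
Qed.
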